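(* Let $K$ be a field, and let $R \in \mathfrak R_K$ be of countable type, of Loewy length $\sigma + 1$, and of top layer dimension $n$, where $0 < n < \omega$. Then there is a $K$-algebra isomorphism $R \cong B_{\sigma,n}$.
   Context: Socle sequence of a ring $R$ (as a right module over itself): $S_0 = 0$, $S_{\alpha+1}/S_\alpha = \mathrm{Soc}(R/S_\alpha)$, and $S_\alpha = \bigcup_{\beta<\alpha} S_\beta$ for limit $\alpha$. $R$ is semiartinian if $S_\tau = R$ for some ordinal $\tau$; the least such $\tau$ is the Loewy length, which for $R \neq 0$ has the form $\sigma+1$. The layers are $L_\alpha = S_{\alpha+1}/S_\alpha$ for $\alpha \le \sigma$. For a field $K$ and a cardinal $\lambda$, $K^{(\lambda)}$ denotes the direct sum of $\lambda$ copies of $K$ with componentwise operations, regarded as a $K$-algebra without unit. $\mathfrak R_K$ is the class of all commutative von Neumann regular semiartinian $K$-algebras $R$ (of Loewy length $\sigma+1$) such that for each $\alpha \le \sigma$ there are a cardinal $\lambda_\alpha>0$ and a $K$-linear isomorphism of $K$-algebras without unit $L_\alpha \cong K^{(\lambda_\alpha)}$. Here $\lambda_\sigma$ is finite and is called the top layer dimension of $R$. $R \in \mathfrak R_K$ is of countable type if $\sigma$ is countable and all $\lambda_\alpha$ ($\alpha\le\sigma$) are countable. For a field $K$, an infinite cardinal (or infinite index set) $\kappa$ and a sequence $\mathcal R = (R_\alpha \mid \alpha<\kappa)$ of $K$-algebras, let $P = \prod_{\alpha<\kappa} R_\alpha$, $I = \bigoplus_{\alpha<\kappa} R_\alpha \subseteq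 P$, and let $R(\kappa,K,\mathcal R)$ denote the $K$-subalgebra $I \oplus 1_P\cdot K$ of $P$. $\boxplus$ denotes the ring direct product. The $K$-algebras $B_{\alpha,n}$ ($\alpha$ an ordinal, $0<n<\omega$) are defined recursively: $B_{0,1} = K$; for $\alpha = \beta+1$, $B_{\alpha,1} = R(\aleph_0,K,\mathcal R)$ where $\mathcal R$ is the constant sequence $R_m = B_{\beta,1}$ ($m<\aleph_0$); for limit $\alpha$, $B_{\alpha,1} = R(\alpha,K,(B_{\beta,1}\mid \beta<\alpha))$; and for $1<n<\omega$, $B_{\alpha,n} = B_{\alpha,1}\boxplus\cdots\boxplus B_{\alpha,1}$ ($n$ copies). *)

(* Defs.v *)
From Stdlib Require List.
From mathcomp Require Import all_boot all_algebra.
Set Implicit Arguments. Unset Strict Implicit. Unset Printing Implicit Defensive.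
Import GRing.Theory.
Local Open Scope ring_scope.

(* Ordinals are represented by well-ordered types (W, lt).  A fixed ordinal  *)
(* sigma+1 is represented by a well-order W with a greatest element [top];   *)
(* then the elements of W correspond to the ordinals alpha <= sigma and      *)
(* [top] corresponds to sigma.                                               *)

Section Ord.
Variables (W : Type) (lt : W -> W -> Prop).

Definition strict_total_order : Prop :=
  (forall a b c, lt a b -> lt b c -> lt a c) /\
  (forall a b, lt a b \/ a = b \/ lt b a).

Definition is_min (w : W) : Prop := forall v, ~ lt v w.
Definition imm_pred (v w : W) : Prop := lt v w /\ forall u, ~ (lt v u /\ lt u w).
Definition is_limit (w : W) : Prop := ~ is_min w /\ ~ (exists v, imm_pred v w).
End Ord.

Section Socle.
Variables (K : fieldType) (R : comAlgType K).

Definition right_ideal (J : R -> Prop) : Prop :=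
  J 0 /\ (forall x y, J x -> J y -> J (x + y)) /\ (forall x r, J x -> J (x * r)).

(* J/I is a simple submodule of R/I: J is a right ideal containing I,      *)
Definition minimal_over (I J : R -> Prop) : Prop :=
  right_ideal J /\ (forall x, I x -> J x) /\ (exists x, J x /\ ~ I x) /\
  (forall J', right_ideal J' -> (forall x, I x -> J' x) -> (forall x, J' x -> J x) ->
     (forall x, J' x -> I x) \/ (forall x, J x -> J' x)).

(* soc_step I = the preimage in R of Soc(R/I), i.e. I plus all finite sums *)
(* of elements of simple submodules of R/I.                                *)
Inductive soc_step (I : R -> Prop) : R -> Prop :=
  | ss_base x : I x -> soc_step I x
  | ss_add x y (J : R -> Prop) : soc_step I x -> minimal_over I J -> J y ->
      soc_step I (x + y).

Variables (W : Type) (lt : W -> W -> Prop) (wf : well_founded lt).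

Definition socle_seq : W -> R -> Prop :=
  Fix wf (fun _ => R -> Prop)
    (fun w rec x =>
       (is_min lt w /\ x = 0) \/
       (exists v (h : lt v w), imm_pred lt v w /\ soc_step (rec v h) x) \/
       (is_limit lt w /\ exists v (h : lt v w), rec v h x)).

Definition finsupp (L : Type) (g : L -> K) : Prop :=
  exists s : seq L, forall l, g l <> 0 -> List.In l s.

(* phi : S_{w+1} -> K^(L) induces a K-linear isomorphism of K-algebras     *)
(* without unit  L_w = S_{w+1}/S_w  ~=  K^(L)  (its kernel is exactly S_w). *)
Definition layer_iso (w : W) (L : Type) (phi : R -> L -> K) : Prop :=
  let T := soc_step (socle_seq w) in
  (forall x y, T x -> T y -> forall l, phi (x + y) l = phi x l + phi y l) /\
  (forall (c : K) x, T x -> forall l, phi (c *: x) l = c * phi x l) /\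
  (forall x y, T x -> T y -> forall l, phi (x * y) l = phi x l * phi y l) /\
  (forall x, T x -> finsupp (phi x)) /\
  (forall g, finsupp g -> exists x, T x /\ forall l, phi x l = g l) /\
  (forall x, T x -> ((forall l, phi x l = 0) <-> socle_seq w x)).

Definition von_neumann_regular : Prop := forall a : R, exists x, a = a * x * a.
End Socle.

(* The algebras B_{alpha,n}.  Elements of the iterated products are          *)
(* represented in the universal type [El]: a leaf is an element of K,        *)
(* NodeN f an element of a product indexed by nat (aleph_0), and NodeW g an *)
(* element of a product indexed by {u | u < w} (components outside this set  *)
(* are required to be Leaf 0, so this is a faithful encoding of the product). *)

Section B.
Variables (K : fieldType) (W : Type) (lt : W -> W -> Prop) (wf : well_founded lt).

Inductive El : Type :=
  | Leaf of K
  | NodeN of (nat -> El)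
  | NodeW of (W -> El).

Fixpoint el_add (x y : El) : El :=
  match x, y with
  | Leaf a, Leaf b => Leaf (a + b)
  | NodeN f, NodeN g => NodeN (fun m => el_add (f m) (g m))
  | NodeW f, NodeW g => NodeW (fun u => el_add (f u) (g u))
  | _, _ => Leaf 0
  end.

Fixpoint el_mul (x y : El) : El :=
  match x, y with
  | Leaf a, Leaf b => Leaf (a * b)
  | NodeN f, NodeN g => NodeN (fun m => el_mul (f m) (g m))
  | NodeW f, NodeW g => NodeW (fun u => el_mul (f u) (g u))
  | _, _ => Leaf 0
  end.

Fixpoint el_scale (c : K) (x : El) : El :=
  match x with
  | Leaf a => Leaf (c * a)
  | NodeN f => NodeN (fun m => el_scale c (f m))
  | NodeW f => NodeW (fun u => el_scale c (f u))
  end.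

(* Bscal w c x  <->  x = c * 1 in B_{w,1} *)
Definition Bscal : W -> K -> El -> Prop :=
  Fix wf (fun _ => K -> El -> Prop)
    (fun w rec c x =>
       (is_min lt w /\ x = Leaf c) \/
       (exists v (h : lt v w), imm_pred lt v w /\
          exists f, x = NodeN f /\ forall m, rec v h c (f m)) \/
       (is_limit lt w /\ exists g, x = NodeW g /\
          (forall u (h : lt u w), rec u h c (g u)) /\
          (forall u, ~ lt u w -> g u = Leaf 0))).

(* Bset w x  <->  x in B_{w,1}:
   - w = 0     : B = K;
   - w = v + 1 : B = R(aleph_0, K, (B_{v,1})_{m<omega}) = I (+) K 1_P, i.e.
                 x in prod_m B_{v,1} and x_m = c 1 for all but finitely many m;
   - w limit   : B = R(w, K, (B_{u,1})_{u<w}) likewise. *)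
Definition Bset : W -> El -> Prop :=
  Fix wf (fun _ => El -> Prop)
    (fun w rec x =>
       (is_min lt w /\ exists k, x = Leaf k) \/
       (exists v (h : lt v w), imm_pred lt v w /\
          exists f, x = NodeN f /\ (forall m, rec v h (f m)) /\
          exists (c : K) (s : seq nat), forall m, ~ List.In m s -> Bscal v c (f m)) \/
       (is_limit lt w /\ exists g, x = NodeW g /\
          (forall u (h : lt u w), rec u h (g u)) /\
          (forall u, ~ lt u w -> g u = Leaf 0) /\
          exists (c : K) (s : seq W), forall u, lt u w -> ~ List.In u s -> Bscal u c (g u))).

(* f : R -> B_{w,n} = B_{w,1} x ... x B_{w,1} (n copies, 'I_n -> El) is a   *)
(* K-algebra isomorphism. *)
Definition B_iso (R : comAlgType K) (w : W) (n : nat) (f : R -> 'I_n -> El) : Prop :=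
  (forall x i, Bset w (f x i)) /\
  (forall y : 'I_n -> El, (forall i, Bset w (y i)) -> exists x, forall i, f x i = y i) /\
  (forall x y, (forall i, f x i = f y i) -> x = y) /\
  (forall x y i, f (x + y) i = el_add (f x i) (f y i)) /\
  (forall x y i, f (x * y) i = el_mul (f x i) (f y i)) /\
  (forall (c : K) x i, f (c *: x) i = el_scale c (f x i)) /\
  (forall i, Bscal w 1 (f 1 i)).
End B.

(* Main.v *)
From Stdlib Require Import ClassicalEpsilon FunctionalExtensionality Classical.
From Stdlib Require Cantor List.
Require Import Defs.
From mathcomp Require Import all_boot all_algebra.
From mathcomp Require Import ring.
Set Implicit Arguments. Unset Strict Implicit. Unset Printing Implicit Defensive.
Import GRing.Theory.
Local Open Scope ring_scope.

Section Order.
Variables (W : Type) (lt : W -> W -> Prop) (wf : well_founded lt).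
Hypothesis Hsto : strict_total_order lt.

Lemma lt_irr w : ~ lt w w.
Proof.
elim: (wf w) => {}w _ IH H. exact: (IH w H H).
Qed.

Lemma lt_trans a b c : lt a b -> lt b c -> lt a c.
Proof. by case: Hsto => H _; apply: H. Qed.

Lemma lt_tot a b : lt a b \/ a = b \/ lt b a.
Proof. by case: Hsto => _ H; apply: H. Qed.

Lemma lt_asym a b : lt a b -> ~ lt b a.
Proof. move=> H1 H2; exact: (lt_irr (lt_trans H1 H2)). Qed.

Lemma kind w : is_min lt w \/ (exists v, imm_pred lt v w) \/ is_limit lt w.
Proof.
case: (classic (is_min lt w)) => Hm; first by left.
case: (classic (exists v, imm_pred lt v w)) => Hp; first by right; left.
by right; right; split.
Qed.

Lemma imm_pred_uniq v v' w : imm_pred lt v w -> imm_pred lt v' w -> v = v'.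
Proof.
move=> [H1 H2] [H1' H2'].
case: (lt_tot v v') => [h|[//|h]].
- by case: (H2 v').
- by case: (H2' v).
Qed.

Lemma imm_pred_le v w u : imm_pred lt v w -> lt u w -> u = v \/ lt u v.
Proof.
move=> [H1 H2] Hu.
case: (lt_tot u v) => [h|[h|h]]; [by right|by left|by case: (H2 u)].
Qed.

Lemma limit_between w u : is_limit lt w -> lt u w -> exists u', lt u u' /\ lt u' w.
Proof.
move=> [_ Hl] Hu.
apply: NNPP => Hn; apply: Hl; exists u; split => // u' [h1 h2].
by apply: Hn; exists u'.
Qed.

Lemma succ_not_min v w : imm_pred lt v w -> ~ is_min lt w.
Proof. by move=> [H _] Hm; apply: (Hm v). Qed.

Lemma succ_not_lim v w : imm_pred lt v w -> ~ is_limit lt w.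
Proof. by move=> H [_ Hl]; apply: Hl; exists v. Qed.

End Order.












Lemma funext_dep2 (A : Type) (B : A -> Type) (C : Type) (f g : forall a, B a -> C) :
  (forall a b, f a b = g a b) -> f = g.
Proof.
move=> H; apply: functional_extensionality_dep => a.
by apply: functional_extensionality_dep => b.
Qed.

Section Unfold.
Variables (K : fieldType) (R : comAlgType K).
Variables (W : Type) (lt : W -> W -> Prop) (wf : well_founded lt).
Hypothesis Hsto : strict_total_order lt.
Local Notation S := (@socle_seq K R W lt wf).
Local Notation Bscal := (@Bscal K W lt wf).
Local Notation Bset := (@Bset K W lt wf).
Local Notation Leaf := (@Leaf K W).

Lemma S_eq w : S w = (fun x : R =>
       (is_min lt w /\ x = 0) \/
       (exists v (h : lt v w), imm_pred lt v w /\ soc_step (S v) x) \/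
       (is_limit lt w /\ exists v (h : lt v w), S v x)).
Proof.
rewrite /socle_seq Fix_eq //.
by move=> x f g H; rewrite (funext_dep2 H).
Qed.

Lemma S_min w x : is_min lt w -> (S w x <-> x = 0).
Proof.
move=> Hm; rewrite S_eq; split.
- case=> [[_ ->]//|[[v [h _]]|[[Hm' _] _]]]; [by case: (Hm v)| by []].
- by move=> ->; left.
Qed.

Lemma S_succ v w x : imm_pred lt v w ->
  (S w x <-> soc_step (S v) x).
Proof.
move=> Hp; rewrite S_eq; split.
- case=> [[Hm _]|[[v' [h [Hp' Hx]]]|[Hl _]]].
  + by case: (succ_not_min Hp).
  + by rewrite (imm_pred_uniq Hsto Hp Hp').
  + by case: (succ_not_lim Hp).
- move=> Hx; right; left; exists v; exists (proj1 Hp); by split.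
Qed.

Lemma S_lim w x : is_limit lt w ->
  (S w x <-> exists v, lt v w /\ S v x).
Proof.
move=> Hl; rewrite S_eq; split.
- case=> [[Hm _]|[[v' [h [Hp' Hx]]]|[_ [v [h Hx]]]]].
  + by case: Hl.
  + by case: (succ_not_lim Hp').
  + by exists v.
- move=> [v [h Hx]]; right; right; split => //; by exists v, h.
Qed.

Lemma Bscal_eq w : Bscal w = (fun c x =>
       (is_min lt w /\ x = Leaf c) \/
       (exists v (h : lt v w), imm_pred lt v w /\
          exists f, x = NodeN f /\ forall m, Bscal v c (f m)) \/
       (is_limit lt w /\ exists g, x = NodeW g /\
          (forall u (h : lt u w), Bscal u c (g u)) /\
          (forall u, ~ lt u w -> g u = Leaf 0))).
Proof.
rewrite /Defs.Bscal Fix_eq //.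
by move=> x f g H; rewrite (funext_dep2 H).
Qed.

Lemma Bset_eq w : Bset w = (fun x =>
       (is_min lt w /\ exists k, x = Leaf k) \/
       (exists v (h : lt v w), imm_pred lt v w /\
          exists f, x = NodeN f /\ (forall m, Bset v (f m)) /\
          exists (c : K) (s : seq nat), forall m, ~ List.In m s -> Bscal v c (f m)) \/
       (is_limit lt w /\ exists g, x = NodeW g /\
          (forall u (h : lt u w), Bset u (g u)) /\
          (forall u, ~ lt u w -> g u = Leaf 0) /\
          exists (c : K) (s : seq W), forall u, lt u w -> ~ List.In u s -> Bscal u c (g u))).
Proof.
rewrite /Defs.Bset Fix_eq //.
by move=> x f g H; rewrite (funext_dep2 H).
Qed.

Lemma Bscal_min w c x : is_min lt w -> (Bscal w c x <-> x = Leaf c).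
Proof.
move=> Hm; rewrite Bscal_eq; split.
- case=> [[_ ->]//|[[v [h _]]|[[Hm' _] _]]]; [by case: (Hm v)| by []].
- by move=> ->; left.
Qed.

Lemma Bscal_succ v w c x : imm_pred lt v w ->
  (Bscal w c x <-> exists f, x = NodeN f /\ forall m, Bscal v c (f m)).
Proof.
move=> Hp; rewrite Bscal_eq; split.
- case=> [[Hm _]|[[v' [h [Hp' Hx]]]|[Hl _]]].
  + by case: (succ_not_min Hp).
  + by rewrite (imm_pred_uniq Hsto Hp Hp').
  + by case: (succ_not_lim Hp).
- move=> Hx; right; left; exists v; exists (proj1 Hp); by split.
Qed.

Lemma Bscal_lim w c x : is_limit lt w ->
  (Bscal w c x <-> exists g, x = NodeW g /\
          (forall u, lt u w -> Bscal u c (g u)) /\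
          (forall u, ~ lt u w -> g u = Leaf 0)).
Proof.
move=> Hl; rewrite Bscal_eq; split.
- case=> [[Hm _]|[[v' [h [Hp' Hx]]]|[_ Hx]]].
  + by case: Hl.
  + by case: (succ_not_lim Hp').
  + exact: Hx.
- by move=> Hx; right; right; split.
Qed.

Lemma Bset_min w x : is_min lt w -> (Bset w x <-> exists k, x = Leaf k).
Proof.
move=> Hm; rewrite Bset_eq; split.
- case=> [[_ H]//|[[v [h _]]|[[Hm' _] _]]]; [by case: (Hm v)| by []].
- by move=> H; left.
Qed.

Lemma Bset_succ v w x : imm_pred lt v w ->
  (Bset w x <-> exists f, x = NodeN f /\ (forall m, Bset v (f m)) /\
          exists (c : K) (s : seq nat), forall m, ~ List.In m s -> Bscal v c (f m)).
Proof.
move=> Hp; rewrite Bset_eq; split.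
- case=> [[Hm _]|[[v' [h [Hp' Hx]]]|[Hl _]]].
  + by case: (succ_not_min Hp).
  + by rewrite (imm_pred_uniq Hsto Hp Hp').
  + by case: (succ_not_lim Hp).
- move=> Hx; right; left; exists v; exists (proj1 Hp); by split.
Qed.

Lemma Bset_lim w x : is_limit lt w ->
  (Bset w x <-> exists g, x = NodeW g /\
          (forall u, lt u w -> Bset u (g u)) /\
          (forall u, ~ lt u w -> g u = Leaf 0) /\
          exists (c : K) (s : seq W), forall u, lt u w -> ~ List.In u s -> Bscal u c (g u)).
Proof.
move=> Hl; rewrite Bset_eq; split.
- case=> [[Hm _]|[[v' [h [Hp' Hx]]]|[_ Hx]]].
  + by case: Hl.
  + by case: (succ_not_lim Hp').
  + exact: Hx.
- by move=> Hx; right; right; split.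
Qed.

Lemma Bscal_fun w c x y : Bscal w c x -> Bscal w c y -> x = y.
Proof.
elim: (wf w) x y => {}w _ IH x y.
case: (kind lt w) => [Hm|[[v Hp]|Hl]].
- by rewrite !(Bscal_min _ _ Hm) => -> ->.
- rewrite !(Bscal_succ _ _ Hp) => [[f [-> Hf]] [g [-> Hg]]].
  congr NodeN; apply: functional_extensionality => m.
  exact: (IH v (proj1 Hp)).
- rewrite !(Bscal_lim _ _ Hl) => [[f [-> [Hf Hf']]] [g [-> [Hg Hg']]]].
  congr NodeW; apply: functional_extensionality => u.
  case: (classic (lt u w)) => Hu.
  + exact: (IH u Hu _ _ (Hf u Hu) (Hg u Hu)).
  + by rewrite Hf' // Hg'.
Qed.

Lemma Bscal_scale w a c x : Bscal w a x -> Bscal w (c * a) (el_scale c x).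
Proof.
elim: (wf w) x => {}w _ IH x.
case: (kind lt w) => [Hm|[[v Hp]|Hl]].
- by rewrite !(Bscal_min _ _ Hm) => ->.
- rewrite !(Bscal_succ _ _ Hp) => [[f [-> Hf]]].
  exists (fun m => el_scale c (f m)); split => // m.
  apply: (IH v (proj1 Hp) (f m)); exact: Hf.
- rewrite !(Bscal_lim _ _ Hl) => [[f [-> [Hf Hf']]]].
  exists (fun m => el_scale c (f m)); split => //; split.
  + move=> u Hu; apply: (IH u Hu (f u)); exact: Hf.
  + move=> u Hu; rewrite (Hf' u Hu) /=; congr Defs.Leaf; exact: mulr0.
Qed.

End Unfold.

Section Ideals.
Variables (K : fieldType) (R : comAlgType K).

Definition sA (c : K) : R := c%:A.
Lemma scaleE c (x : R) : c *: x = sA c * x.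
Proof. by rewrite /sA mulr_algl. Qed.
Lemma sA_mul c d : sA (c * d) = sA c * sA d.
Proof. by rewrite /sA mulr_algl scalerA. Qed.
Lemma sA_add c d : sA (c + d) = sA c + sA d.
Proof. by rewrite /sA scalerDl. Qed.
Lemma sA_1 : sA 1 = 1.
Proof. by rewrite /sA scale1r. Qed.
Lemma sA_0 : sA 0 = 0.
Proof. by rewrite /sA scale0r. Qed.
Lemma sA_N c : sA (- c) = - sA c.
Proof. by rewrite /sA scaleNr. Qed.

Lemma ri_neg (J : R -> Prop) x : right_ideal J -> J x -> J (- x).
Proof. by move=> [_ [_ HM]] Hx; rewrite -mulrN1; apply: HM. Qed.

Lemma ri_sub (J : R -> Prop) x y : right_ideal J -> J x -> J y -> J (x - y).
Proof. move=> HJ Hx Hy; case: (HJ) => _ [HA _]; apply: HA => //; exact: ri_neg. Qed.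

Lemma ri_add (J : R -> Prop) x y : right_ideal J -> J x -> J y -> J (x + y).
Proof. by move=> [_ [HA _]]; apply: HA. Qed.

Lemma ri_0 (J : R -> Prop) : right_ideal J -> J 0.
Proof. by case. Qed.

Lemma ri_mulr (J : R -> Prop) x r : right_ideal J -> J x -> J (x * r).
Proof. by move=> [_ [_ HM]]; apply: HM. Qed.

Lemma ri_mull (J : R -> Prop) x r : right_ideal J -> J x -> J (r * x).
Proof. by move=> [_ [_ HM]] Hx; rewrite mulrC; apply: HM. Qed.

Lemma ri_scale (J : R -> Prop) (c : K) x : right_ideal J -> J x -> J (c *: x).
Proof. by move=> HJ Hx; rewrite -mulr_algr; apply: ri_mulr. Qed.

Lemma ri_unscale (J : R -> Prop) (c : K) x : right_ideal J -> c != 0 -> J (c *: x) -> J x.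
Proof.
move=> HJ Hc Hx; have := ri_scale c^-1 HJ Hx.
by rewrite scalerA mulVf // scale1r.
Qed.

Lemma ri_ext (J J' : R -> Prop) : (forall x, J x <-> J' x) -> right_ideal J' -> right_ideal J.
Proof.
move=> H [H0 [HA HM]]; split; first by apply/H.
split; first by move=> x y /H Hx /H Hy; apply/H; apply: HA.
by move=> x r /H Hx; apply/H; apply: HM.
Qed.


Lemma soc_step_ideal (I : R -> Prop) : right_ideal I -> right_ideal (soc_step I).
Proof.
move=> HI.
have Hb : forall x y, soc_step I x -> I y -> soc_step I (x + y).
  move=> x y; elim=> {x} [x Hx|x1 y1 J Hx1 IH HJ Hy1] Hy.
  - by apply: ss_base; apply: ri_add.
  - rewrite addrAC; apply: ss_add HJ Hy1; exact: IH.
split; first by apply: ss_base; exact: ri_0.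
split.
- move=> x y Hx; elim=> {y} [y Hy|y1 y2 J Hy1 IH HJ Hy2].
  + exact: Hb.
  + rewrite addrA; apply: ss_add HJ Hy2; exact: IH.
- move=> x r; elim=> {x} [x Hx|x y J Hx IH HJ Hy].
  + by apply: ss_base; apply: ri_mulr.
  + rewrite mulrDl; apply: (ss_add IH HJ).
    by case: HJ => HJ _; apply: ri_mulr.
Qed.

End Ideals.
Arguments sA {K R} c.

Lemma idem_compl (R : comRingType) (q : R) : q * q = q -> (1 - q) * (1 - q) = 1 - q.
Proof. move=> Hq; have -> : (1 - q) * (1 - q) = 1 - q - q + q * q by ring. by rewrite Hq subrK. Qed.

Lemma idem_mul (R : comRingType) (a b : R) : a * a = a -> b * b = b -> (a * b) * (a * b) = a * b.
Proof. move=> Ha Hb; have -> : (a * b) * (a * b) = (a * a) * (b * b) by ring. by rewrite Ha Hb. Qed.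

Section Socle.
Variables (K : fieldType) (R : comAlgType K).
Variables (W : Type) (lt : W -> W -> Prop) (wf : well_founded lt).
Hypothesis Hsto : strict_total_order lt.
Local Notation S := (@socle_seq K R W lt wf).
Definition T w := soc_step (S w).

Lemma S_T w x : S w x -> T w x.
Proof. exact: ss_base. Qed.

Lemma S_mono w v x : lt v w -> S v x -> S w x.
Proof.
elim: (wf w) v x => {}w _ IH v x Hv Hx.
case: (kind lt w) => [Hm|[[v' Hp]|Hl]].
- by case: (Hm v).
- apply/(S_succ wf Hsto _ Hp); apply: ss_base.
  case: (imm_pred_le Hsto Hp Hv) => [<- //|h].
  exact: (IH v' (proj1 Hp) v x h Hx).
- by apply/(S_lim wf _ Hl); exists v.
Qed.

Lemma not_min_ex w : ~ is_min lt w -> exists v, lt v w.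
Proof. move=> H; apply: NNPP => H'; apply: H => v Hv; apply: H'; by exists v. Qed.

Lemma S_ideal w : right_ideal (S w).
Proof.
elim: (wf w) => {}w _ IH.
case: (kind lt w) => [Hm|[[v Hp]|Hl]].
- apply: (ri_ext (J' := fun x => x = 0)); first by move=> x; exact: (S_min wf x Hm).
  split => //; split; first by move=> x y -> ->; rewrite addr0.
  by move=> x r ->; rewrite mul0r.
- apply: (ri_ext (J' := soc_step (S v))); first by move=> x; exact: (S_succ wf Hsto x Hp).
  exact: soc_step_ideal (IH v (proj1 Hp)).
- apply: (ri_ext (J' := fun x => exists v, lt v w /\ S v x)); first by move=> x; exact: (S_lim wf x Hl).
  split.
    have [v Hv] := not_min_ex (proj1 Hl).
    by exists v; split => //; apply: ri_0 (IH v Hv).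
  split.
  + move=> x y [v1 [H1 Hx]] [v2 [H2 Hy]].
    case: (lt_tot Hsto v1 v2) => [h|[h|h]].
    * exists v2; split => //; apply: ri_add (IH v2 H2) _ Hy; exact: S_mono h Hx.
    * subst; exists v2; split => //; exact: ri_add (IH v2 H2) Hx Hy.
    * exists v1; split => //; apply: ri_add (IH v1 H1) Hx _; exact: S_mono h Hy.
  + move=> x r [v1 [H1 Hx]]; exists v1; split => //; exact: ri_mulr (IH v1 H1) Hx.
Qed.

Lemma T_ideal w : right_ideal (T w).
Proof. exact: soc_step_ideal (S_ideal w). Qed.

Lemma T_S v u x : lt v u -> T v x -> S u x.
Proof.
elim: (wf u) v x => {}u _ IH v x Hv Hx.
case: (kind lt u) => [Hm|[[v' Hp]|Hl]].
- by case: (Hm v).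
- apply/(S_succ wf Hsto _ Hp).
  case: (imm_pred_le Hsto Hp Hv) => [<- //|h].
  apply: ss_base; exact: (IH v' (proj1 Hp) v x h Hx).
- have [v' [h1 h2]] := limit_between Hl Hv.
  apply/(S_lim wf _ Hl); exists v'; split => //; exact: IH h2 _ _ h1 Hx.
Qed.

Lemma S_low u y : S u y -> (is_min lt u /\ y = 0) \/ exists v, lt v u /\ T v y.
Proof.
case: (kind lt u) => [Hm|[[v Hp]|Hl]].
- by move/(S_min wf _ Hm) => ->; left.
- by move/(S_succ wf Hsto _ Hp) => H; right; exists v; split => //; case: Hp.
- by move/(S_lim wf _ Hl) => [v [h H]]; right; exists v; split => //; apply: S_T.
Qed.

Lemma MC v f : ~ S v f -> (forall x, exists c, S v (x * f - c *: f)) -> T v f.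
Proof.
move=> Hf Hat.
have HS := S_ideal v.
pose J0 := fun y => exists c, S v (y - c *: f).
have HJ0 : right_ideal J0.
  split; first by exists 0; rewrite scale0r subr0; exact: (ri_0 HS).
  split.
  - move=> x y [c1 H1] [c2 H2]; exists (c1 + c2).
    have -> : x + y - (c1 + c2) *: f = (x - c1 *: f) + (y - c2 *: f).
      by rewrite !scaleE sA_add; ring.
    exact: (ri_add HS H1 H2).
  - move=> y r [c Hc]; have [d Hd] := Hat r; exists (c * d).
    have -> : y * r - (c * d) *: f = (y - c *: f) * r + c *: (r * f - d *: f).
      by rewrite !scaleE sA_mul; ring.
    exact: (ri_add HS (ri_mulr r HS Hc) (ri_scale c HS Hd)).
have Hmin : minimal_over (S v) J0.
  split => //; split.
    by move=> x Hx; exists 0; rewrite scale0r subr0.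
  split; first by exists f; split => //; exists 1; rewrite scale1r subrr; exact: ri_0.
  move=> J' HJ' H1 H2.
  case: (classic (exists y, J' y /\ ~ S v y)) => [[y [Hy Hny]]|Hn]; last first.
    left => x Hx; apply: NNPP => Hx'; apply: Hn; by exists x.
  right.
  have [c Hc] := H2 y Hy.
  have Hc0 : c != 0.
    apply/eqP => Hc0; apply: Hny; move: Hc; by rewrite Hc0 scale0r subr0.
  have Hcf : J' (c *: f).
    have -> : c *: f = y - (y - c *: f) by rewrite opprB addrC subrK.
    exact: (ri_sub HJ' Hy (H1 _ Hc)).
  have Hf' : J' f by apply: (ri_unscale HJ' Hc0 Hcf).
  move=> x [d Hd].
  have -> : x = (x - d *: f) + d *: f by rewrite subrK.
  exact: (ri_add HJ' (H1 _ Hd) (ri_scale d HJ' Hf')).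
have H0 : soc_step (S v) 0 by apply: ss_base; exact: (ri_0 HS).
have HJf : J0 f by exists 1; rewrite scale1r subrr; exact: (ri_0 HS).
have := ss_add H0 Hmin HJf.
by rewrite add0r.
Qed.

Definition atomic w (e : R) := e * e = e /\ T w e /\ (~ S w e) /\
  forall x, exists c, S w (x * e - c *: e).

Lemma atomic_ne0 w e : atomic w e -> e <> 0.
Proof. move=> [_ [_ [H _]]] He; apply: H; rewrite He; exact: (ri_0 (S_ideal w)). Qed.

Lemma atomic_sub w e q : atomic w e -> q * q = q -> S w q -> atomic w (e * (1 - q)).
Proof.
move=> [He [HT [HnS Hat]]] Hq HSq.
have HS := S_ideal w.
split; first by apply: idem_mul => //; exact: idem_compl.
split; first exact: (ri_mulr _ (T_ideal w) HT).
split.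
  move=> H; apply: HnS.
  have -> : e = e * (1 - q) + q * e by ring.
  exact: (ri_add HS H (ri_mulr e HS HSq)).
move=> x; have [c Hc] := Hat x; exists c.
have -> : x * (e * (1 - q)) - c *: (e * (1 - q)) = (x * e - c *: e) * (1 - q).
  by rewrite !scaleE; ring.
exact: (ri_mulr _ HS Hc).
Qed.

Lemma atomic_add v h g : atomic v h -> S v g -> g * g = g -> h * g = 0 -> atomic v (h + g).
Proof.
move=> [He [HT [HnS Hat]]] HSg Hg Hhg.
have HS := S_ideal v.
split.
  have -> : (h + g) * (h + g) = h * h + g * g + (h * g) *+ 2 by ring.
  by rewrite He Hg Hhg mul0rn addr0.
split; first exact: (ri_add (T_ideal v) HT (S_T HSg)).
split.
  move=> H; apply: HnS.
  have -> : h = (h + g) - g by ring.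
  exact: (ri_sub HS H HSg).
move=> x; have [c Hc] := Hat x; exists c.
have -> : x * (h + g) - c *: (h + g) = (x * h - c *: h) + (g * x - c *: g).
  by rewrite !scaleE; ring.
apply: (ri_add HS Hc); apply: (ri_sub HS (ri_mulr _ HS HSg)); exact: (ri_scale c HS HSg).
Qed.

Lemma atomic_mul v a r : atomic v a -> (a * r) * (a * r) = a * r ->
  S v (a * r) \/ atomic v (a * r).
Proof.
move=> [Ha [HT [HnS Hat]]] Hg.
have HS := S_ideal v.
have [c Hc] := Hat r.
have Hs : S v (a * r - c *: a) by rewrite mulrC.
case: (eqVneq c 0) => [Hc0|Hc0].
  by left; move: Hs; rewrite Hc0 scale0r subr0.
have Hcc : S v ((c * c - c) *: a).
  have -> : (c * c - c) *: a = (a * r - c *: a) - ((a * r) * (a * r) - (c * c) *: a).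
    rewrite Hg !scaleE sA_add sA_mul sA_N; ring.
  apply: (ri_sub HS Hs).
  have E : (a * r) * (a * r) - (c * c) *: a =
      (a * r - c *: a) * (a * r - c *: a) + (a * r - c *: a) * ((c *: a) *+ 2)
      + (c * c) *: (a * a - a).
    by rewrite !scaleE sA_mul; ring.
  rewrite Ha subrr scaler0 addr0 in E; rewrite E.
  apply: (ri_add HS (ri_mulr _ HS Hs)).
  exact: (ri_mulr _ HS Hs).
have Hc1 : c = 1.
  case: (eqVneq (c * c - c) 0) => [H|H].
    apply: (mulfI Hc0); rewrite mulr1; apply/eqP; rewrite -subr_eq0; exact/eqP.
  by case: HnS; apply: (ri_unscale HS H Hcc).
move: Hs; rewrite Hc1 scale1r => Hs.
right; split => //; split; first exact: (ri_mulr _ (T_ideal v) HT).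
split.
  move=> H; apply: HnS.
  have -> : a = a * r - (a * r - a) by ring.
  exact: (ri_sub HS H Hs).
move=> x; have [d Hd] := Hat x; exists d.
have -> : x * (a * r) - d *: (a * r) = (x * a - d *: a) + (a * r - a) * x - d *: (a * r - a).
  by rewrite !scaleE; ring.
apply: (ri_sub HS); last exact: (ri_scale d HS Hs).
exact: (ri_add HS Hd (ri_mulr _ HS Hs)).
Qed.

End Socle.

Fixpoint join (R : comRingType) (s : list R) : R :=
  match s with
  | nil => 0
  | cons a s' => a + join s' - a * join s'
  end.

Section Join.
Variable R : comRingType.
Implicit Types s : list R.

Lemma join_idem s : (forall a, List.In a s -> a * a = a) -> join s * join s = join s.
Proof.
elim: s => [|a s IH] /= H; first by rewrite mul0r.
have Ha := H a (or_introl erefl).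
have Hs := IH (fun b Hb => H b (or_intror Hb)).
have -> : a + join s - a * join s = 1 - (1 - a) * (1 - join s) by ring.
by apply: idem_compl; apply: idem_mul; apply: idem_compl.
Qed.

Lemma join_ge s a : List.In a s -> a * a = a -> a * join s = a.
Proof.
elim: s => [//|b s IH] /= [->|H] Ha.
- have -> : a * (a + join s - a * join s) = a * a + a * join s - (a * a) * join s by ring.
  by rewrite Ha addrK.
- have -> : a * (b + join s - b * join s) = a * b + a * join s - b * (a * join s) by ring.
  rewrite IH //; ring.
Qed.

Lemma join_le s P : (forall a, List.In a s -> a * P = a) -> join s * P = join s.
Proof.
elim: s => [|a s IH] /= H; first by rewrite mul0r.
have Ha := H a (or_introl erefl).
have Hs := IH (fun b Hb => H b (or_intror Hb)).
have -> : (a + join s - a * join s) * P = a * P + join s * P - a * (join s * P) by ring.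
by rewrite Ha Hs.
Qed.

Lemma join_cat s1 s2 : join (s1 ++ s2) = join s1 + join s2 - join s1 * join s2.
Proof.
elim: s1 => [|a s IH] /=; first by rewrite mul0r add0r subr0.
rewrite IH; ring.
Qed.

Lemma join_ideal (J : R -> Prop) s : J 0 -> (forall x y, J x -> J y -> J (x + y)) ->
  (forall x r, J x -> J (x * r)) -> (forall a, List.In a s -> J a) -> J (join s).
Proof.
move=> H0 HA HM; elim: s => [//|a s IH] /= H.
have Ha := H a (or_introl erefl).
have Hs := IH (fun b Hb => H b (or_intror Hb)).
apply: (HA _ _ (HA _ _ Ha Hs)).
have -> : - (a * join s) = a * (join s * -1) by ring.
exact: HM.
Qed.

End Join.

Section Layers.
Variables (K : fieldType) (R : comAlgType K).
Variables (W : Type) (lt : W -> W -> Prop) (wf : well_founded lt).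
Hypothesis Hsto : strict_total_order lt.
Hypothesis Hvnr : von_neumann_regular R.
Local Notation S := (@socle_seq K R W lt wf).
Local Notation T := (@T K R W lt wf).
Local Notation atomic := (@atomic K R W lt wf).

Lemma T_join w (s : list R) : (forall a, List.In a s -> T w a) -> T w (join s).
Proof.
have [H0 [HA HM]] := T_ideal R wf Hsto w.
exact: join_ideal.
Qed.

Section Phi.
Variables (w : W) (L : Type) (phi : R -> L -> K).
Hypothesis Hphi : layer_iso wf w phi.

Lemma phi_add x y l : T w x -> T w y -> phi (x + y) l = phi x l + phi y l.
Proof. by case: Hphi => H _ Hx Hy; apply: H. Qed.
Lemma phi_scale c x l : T w x -> phi (c *: x) l = c * phi x l.
Proof. by case: Hphi => _ [H _] Hx; apply: H. Qed.
Lemma phi_mul x y l : T w x -> T w y -> phi (x * y) l = phi x l * phi y l.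
Proof. by case: Hphi => _ [_ [H _]] Hx Hy; apply: H. Qed.
Lemma phi_fin x : T w x -> finsupp (phi x).
Proof. by case: Hphi => _ [_ [_ [H _]]]; apply: H. Qed.
Lemma phi_surj g : finsupp g -> exists x, T w x /\ forall l, phi x l = g l.
Proof. by case: Hphi => _ [_ [_ [_ [H _]]]]; apply: H. Qed.
Lemma phi_ker x : T w x -> ((forall l, phi x l = 0) <-> S w x).
Proof. by case: Hphi => _ [_ [_ [_ [_ H]]]]; apply: H. Qed.

Lemma phi_sub x y l : T w x -> T w y -> phi (x - y) l = phi x l - phi y l.
Proof.
move=> Hx Hy; have HT := T_ideal R wf Hsto w.
have -> : x - y = x + (-1) *: y by rewrite scaleN1r.
rewrite phi_add //; last exact: ri_scale.
by rewrite phi_scale // mulN1r.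
Qed.

Lemma phi_atomic a l : a * a = a -> T w a -> phi a l = 1 ->
  (forall m, m <> l -> phi a m = 0) -> atomic w a.
Proof.
move=> Ha HTa H1 H0.
have HT := T_ideal R wf Hsto w.
split => //; split => //; split.
  move=> /(phi_ker HTa) H; move: (H l); rewrite H1 => /eqP; by rewrite oner_eq0.
move=> x; exists (phi (x * a) l).
have HTxa : T w (x * a) by exact: ri_mull.
apply/phi_ker; first by apply: (ri_sub HT HTxa); exact: ri_scale.
move=> m; rewrite phi_sub //; last exact: ri_scale.
rewrite phi_scale //.
have Hm : phi (x * a) m = phi (x * a) m * phi a m.
  by rewrite -phi_mul // -mulrA Ha.
case: (classic (m = l)) => [->|Hml]; first by rewrite H1 mulr1 subrr.
by rewrite Hm !H0 // mulr0 mulr0 subrr.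
Qed.

Lemma phi_core y l : T w y -> phi y l != 0 -> (forall m, m <> l -> phi y m = 0) ->
  exists r, let a := y * r in a * a = a /\ T w a /\ phi a l = 1 /\ forall m, m <> l -> phi a m = 0.
Proof.
move=> Hy Hl H0.
have HT := T_ideal R wf Hsto w.
have [q Hq] := Hvnr y.
exists q => a.
have Ha : a * a = a by rewrite /a; rewrite {3}Hq; ring.
have HTa : T w a by exact: ri_mulr.
have E : a = y * (q * y * q) by rewrite /a {1}Hq; ring.
have HT2 : T w (q * y * q) by exact: (ri_mulr q HT (ri_mull q HT Hy)).
have Ey : y = a * y by rewrite /a {1}Hq; ring.
split => //; split => //; split.
  have := phi_mul l HTa Hy; rewrite -Ey => /eqP.
  rewrite -{1}[phi y l]mul1r => /eqP H.
  by apply/esym/(mulIf Hl).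
move=> m Hm; rewrite E phi_mul // H0 // mul0r //.
Qed.

Definition delta (l : L) : L -> K := fun m => if excluded_middle_informative (m = l) then 1 else 0.

Lemma delta_fin l : finsupp (delta l).
Proof.
exists (cons l nil) => m; rewrite /delta.
destruct (excluded_middle_informative (m = l)) as [H|H] => H'; [by left; rewrite H | by case: H'].
Qed.

Lemma lift_l l : exists a, atomic w a /\ phi a l = 1 /\ forall m, m <> l -> phi a m = 0.
Proof.
have [z [Hz Hzl]] := phi_surj (delta_fin l).
have Hz1 : phi z l = 1.
  by rewrite Hzl /delta; destruct (excluded_middle_informative (l = l)) as [e|H]; [done|by case: H].
have Hz0 : forall m, m <> l -> phi z m = 0.
  move=> m Hm; rewrite Hzl /delta.
  by destruct (excluded_middle_informative (m = l)) as [H|e]; [case: Hm|done].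
have Hz1' : phi z l != 0 by rewrite Hz1 oner_eq0.
have [r [Ha [HTa [H1 H0]]]] := @phi_core z l Hz Hz1' Hz0.
exists (z * r); split => //; exact: phi_atomic H1 H0.
Qed.

Lemma lift_in y : T w y -> ~ S w y -> exists r, atomic w (y * r).
Proof.
move=> Hy Hny.
have HT := T_ideal R wf Hsto w.
have [l Hl] : exists l, phi y l != 0.
  apply: NNPP => H; apply: Hny; apply/(phi_ker Hy) => l.
  apply/eqP; apply: NNPP => H'; apply: H; by exists l; apply/negP.
have [a [Hat [H1 H0]]] := lift_l l.
have HTa : T w a by case: Hat => _ [].
have HTya : T w (y * a) by exact: ri_mulr.
have E1 : phi (y * a) l != 0 by rewrite phi_mul // H1 mulr1.
have E2 : forall m, m <> l -> phi (y * a) m = 0 by move=> m Hm; rewrite phi_mul // H0 // mulr0.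
have [r [Hb [HTb [Hb1 Hb0]]]] := @phi_core (y * a) l HTya E1 E2.
exists (a * r); rewrite mulrA; exact: phi_atomic Hb1 Hb0.
Qed.

End Phi.

Hypothesis Hlay : forall w, exists (L : Type) (phi : R -> L -> K),
      inhabited L /\ (exists e : L -> nat, injective e) /\ layer_iso wf w phi.

Lemma lift v y : T v y -> ~ S v y -> exists r, atomic v (y * r).
Proof. have [L [phi [_ [_ Hphi]]]] := Hlay v; move=> Hy Hny; exact: (lift_in Hphi Hy Hny). Qed.

Lemma lev v1 y : T v1 y -> y <> 0 -> exists v2, (v2 = v1 \/ lt v2 v1) /\ T v2 y /\ ~ S v2 y.
Proof.
elim: (wf v1) => {}v1 _ IH Hy Hy0.
case: (classic (S v1 y)) => HS; last by exists v1; split => //; left.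
case: (S_low Hsto HS) => [[_ H]//|[v [Hv HTv]]].
have [v2 [H1 H2]] := IH v Hv HTv Hy0.
exists v2; split => //; right; case: H1 => [->//|h]; exact: (lt_trans Hsto h Hv).
Qed.

Lemma below w f : atomic w f -> forall u, lt u w -> exists h, atomic u h /\ h * f = h.
Proof.
elim: (wf w) f => {}w _ IH f Hf u Hu.
have [Hfi [HTf [HnSf Hatf]]] := Hf.
have HSw := S_ideal R wf Hsto w.
have Hfix : forall x c, f * (x * f - c *: f) = x * f - c *: f.
  move=> x c; rewrite !scaleE; have -> : f * (x * f - sA c * f) = (f * f) * (x - sA c) by ring.
  rewrite Hfi; ring.
case: (kind lt w) => [Hm|[[v Hp]|Hl]].
- by case: (Hm u Hu).
- have HSv := S_ideal R wf Hsto v.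
  have [t [Ht Hnt]] : exists t, T v t /\ ~ S v (f * t).
    apply: NNPP => Hn; apply: (HnSf); apply/(S_succ wf Hsto _ Hp); apply: (MC Hsto).
      by move=> H; apply: (HnSf); exact: (S_mono Hsto (proj1 Hp) H).
    move=> x; have [c Hc] := Hatf x; exists c.
    have Hc' : T v (x * f - c *: f) by apply/(S_succ wf Hsto _ Hp).
    rewrite -Hfix; apply: NNPP => H; apply: (Hn); by exists (x * f - c *: f).
  have Hy : T v (f * t) by exact: (ri_mull _ (T_ideal R wf Hsto v) Ht).
  have [r Ha] := lift Hy Hnt.
  have Haf : f * t * r * f = f * t * r.
    have -> : f * t * r * f = (f * f) * t * r by ring. by rewrite Hfi.
  case: (imm_pred_le Hsto Hp Hu) => [->|h].
    by exists (f * t * r).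
  have [h' [Hh' Hh'a]] := IH v (proj1 Hp) _ Ha u h.
  exists h'; split => //; by rewrite -Hh'a -mulrA Haf.
- have [u' [Hu1 Hu2]] := limit_between Hl Hu.
  have HSu' := S_ideal R wf Hsto u'.
  have [t [Ht Hnt]] : exists t, S w t /\ ~ S u' (f * t).
    apply: NNPP => Hn; apply: (HnSf); apply: (T_S Hsto Hu2); apply: (MC Hsto).
      by move=> H; apply: (HnSf); exact: (S_mono Hsto Hu2 H).
    move=> x; have [c Hc] := Hatf x; exists c.
    rewrite -Hfix; apply: NNPP => H; apply: (Hn); by exists (x * f - c *: f).
  have Hy : S w (f * t) by exact: (ri_mull _ HSw Ht).
  have Hy0 : f * t <> 0 by move=> H; apply: Hnt; rewrite H; exact: (ri_0 HSu').
  case: (S_low Hsto Hy) => [[Hm _]|[v1 [Hv1 HTv1]]]; first by case: Hl.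
  have [v2 [Hv2 [HT2 HnS2]]] := lev HTv1 Hy0.
  have Hv2w : lt v2 w by case: Hv2 => [->//|h]; exact: (lt_trans Hsto h Hv1).
  have Huv2 : lt u v2.
    case: (lt_tot Hsto v2 u') => [h|[h|h]].
    + by case: Hnt; exact: (T_S Hsto h HT2).
    + by rewrite h.
    + exact: (lt_trans Hsto Hu1 h).
  have [r Ha] := lift HT2 HnS2.
  have Haf : f * t * r * f = f * t * r.
    have -> : f * t * r * f = (f * f) * t * r by ring. by rewrite Hfi.
  have [h' [Hh' Hh'a]] := IH v2 Hv2w _ Ha u Huv2.
  exists h'; split => //; by rewrite -Hh'a -mulrA Haf.
Qed.

End Layers.

Section Gens.
Variables (K : fieldType) (R : comAlgType K).
Variables (W : Type) (lt : W -> W -> Prop) (wf : well_founded lt).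
Hypothesis Hsto : strict_total_order lt.
Hypothesis Hvnr : von_neumann_regular R.
Local Notation S := (@socle_seq K R W lt wf).
Local Notation T := (@T K R W lt wf).
Local Notation atomic := (@atomic K R W lt wf).
Hypothesis Hlay : forall w, exists (L : Type) (phi : R -> L -> K),
      inhabited L /\ (exists e : L -> nat, injective e) /\ layer_iso wf w phi.
Hypothesis Hcnt : exists e : W -> nat, injective e.

Lemma atomic_T u a : atomic u a -> T u a.
Proof. by case=> _ []. Qed.

Lemma T0 u : T u 0.
Proof. exact: (ri_0 (T_ideal R wf Hsto u)). Qed.

Lemma gen_level u : exists a : nat -> R, (forall j, a j = 0 \/ atomic u (a j)) /\
  (forall x, T u x -> exists js : seq nat, S u (x - x * join (List.map a js))).
Proof.
have [L [phi [[l0] [[cd Hcd] Hphi]]]] := Hlay u.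
have HT := T_ideal R wf Hsto u.
have [A HA] := ClassicalEpsilon.choice _ (lift_l Hsto Hvnr Hphi).
pose P j x := (exists l, cd l = j /\ x = A l) \/ (~ (exists l, cd l = j) /\ x = 0).
have HPex : forall j, exists x, P j x.
  move=> j; case: (classic (exists l, cd l = j)) => [[l Hl]|Hn].
  - by exists (A l); left; exists l.
  - by exists 0; right.
pose a j := epsilon (inhabits (0 : R)) (P j).
have Ha : forall j, P j (a j) by move=> j; exact: epsilon_spec.
have Hacd : forall l, a (cd l) = A l.
  move=> l; case: (Ha (cd l)) => [[l' [Hl' ->]]|[Hn _]].
  - by rewrite (Hcd _ _ Hl').
  - by case: Hn; exists l.
exists a; split.
  move=> j; case: (Ha j) => [[l [_ ->]]|[_ ->]]; [right; exact: (proj1 (HA l))| by left].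
move=> x Hx.
have [s Hs] := phi_fin Hphi Hx.
exists (List.map cd s).
have -> : List.map a (List.map cd s) = List.map A s.
  rewrite List.map_map; apply: List.map_ext => l; exact: Hacd.
have HTA : forall l, T u (A l) by move=> l; exact: (atomic_T (proj1 (HA l))).
have HTJ : T u (join (List.map A s)).
  apply: (T_join Hsto) => b /List.in_map_iff [l [<- _]]; exact: HTA.
have HTxJ : T u (x * join (List.map A s)) by exact: (ri_mulr _ HT Hx).
apply/(phi_ker Hphi (ri_sub HT Hx HTxJ)) => m.
rewrite (phi_sub Hsto Hphi _ Hx HTxJ) (phi_mul Hphi _ Hx HTJ).
case: (eqVneq (phi x m) 0) => [->|Hm]; first by rewrite mul0r subrr.
have Hin : List.In m s by apply: Hs; apply/eqP.
have [HAi [HA1 HA0]] := HA m.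
have Hge : A m * join (List.map A s) = A m.
  apply: join_ge; first exact: List.in_map.
  by case: HAi.
have : phi (A m * join (List.map A s)) m = phi (A m) m by rewrite Hge.
rewrite (phi_mul Hphi _ (HTA m) HTJ) HA1 mul1r => ->.
by rewrite mulr1 subrr.
Qed.

Lemma gens : exists g : nat -> R, (forall k, g k = 0 \/ exists u, atomic u (g k)) /\
  (forall u x, T u x -> exists ks : seq nat,
      (forall k, List.In k ks -> T u (g k)) /\ x = x * join (List.map g ks)).
Proof.
have [A HA] := ClassicalEpsilon.choice _ gen_level.
have [cW HcW] := Hcnt.
pose P k x := (exists u, cW u = (Cantor.of_nat k).1 /\ x = A u (Cantor.of_nat k).2) \/
              (~ (exists u, cW u = (Cantor.of_nat k).1) /\ x = 0).
have HPex : forall k, exists x, P k x.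
  move=> k; case: (classic (exists u, cW u = (Cantor.of_nat k).1)) => [[u Hu]|Hn].
  - by exists (A u (Cantor.of_nat k).2); left; exists u.
  - by exists 0; right.
pose g k := epsilon (inhabits (0 : R)) (P k).
have Hg : forall k, P k (g k) by move=> k; exact: epsilon_spec.
have Hgc : forall u j, g (Cantor.to_nat (cW u, j)) = A u j.
  move=> u j; case: (Hg (Cantor.to_nat (cW u, j))); rewrite Cantor.cancel_of_to /=.
  - by move=> [u' [Hu' ->]]; rewrite (HcW _ _ Hu').
  - by move=> [Hn _]; case: Hn; exists u.
exists g; split.
  move=> k; case: (Hg k) => [[u [_ ->]]|[_ ->]]; last by left.
  case: (proj1 (HA u) (Cantor.of_nat k).2) => [->|H]; [by left|by right; exists u].
move=> u; elim: (wf u) => {}u _ IH x Hx.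
have HT := T_ideal R wf Hsto u.
have [js Hjs] := proj2 (HA u) x Hx.
pose ks1 := List.map (fun j => Cantor.to_nat (cW u, j)) js.
have Hks1 : List.map g ks1 = List.map (A u) js.
  rewrite List.map_map; apply: List.map_ext => j; exact: Hgc.
have Hks1T : forall k, List.In k ks1 -> T u (g k).
  move=> k /List.in_map_iff [j [<- _]]; rewrite Hgc.
  case: (proj1 (HA u) j) => [->|H]; [exact: T0|exact: atomic_T].
case: (S_low Hsto Hjs) => [[_ H0]|[v [Hv HTv]]].
  exists ks1; split => //; rewrite Hks1; apply/eqP; rewrite -subr_eq0; exact/eqP.
have [ks2 [Hks2 Hy]] := IH v Hv _ HTv.
exists (ks1 ++ ks2); split.
  move=> k Hk; case: (List.in_app_or _ _ _ Hk) => H; first exact: Hks1T.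
  by apply: S_T; apply: (T_S Hsto Hv); apply: Hks2.
rewrite List.map_app join_cat Hks1.
set J1 := join (List.map (A u) js) in Hy *.
set J2 := join (List.map g ks2) in Hy *.
have -> : x * (J1 + J2 - J1 * J2) = x * J1 + (x - x * J1) * J2 by ring.
by rewrite -Hy subrKC.
Qed.

End Gens.

Fixpoint sumL (R : comRingType) (I : Type) (A : I -> R) (s : list I) : R :=
  match s with nil => 0 | cons i s' => A i + sumL A s' end.

Section SumL.
Variables (R : comRingType) (I : Type).
Implicit Types (A B : I -> R) (s : list I).

Lemma sumL_ext A B s : (forall i, List.In i s -> A i = B i) -> sumL A s = sumL B s.
Proof.
elim: s => [//|i s IH] /= H; rewrite (H i (or_introl erefl)) IH //.
by move=> j Hj; apply: H; right.
Qed.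

Lemma sumL_mulr A s X : (forall i, List.In i s -> A i * X = A i) -> sumL A s * X = sumL A s.
Proof.
elim: s => [|i s IH] /= H; first by rewrite mul0r.
rewrite mulrDl H; last by left.
by rewrite IH // => j Hj; apply: H; right.
Qed.

Lemma sumL_ideal (J : R -> Prop) A s : J 0 -> (forall x y, J x -> J y -> J (x + y)) ->
  (forall i, List.In i s -> J (A i)) -> J (sumL A s).
Proof.
move=> H0 HA; elim: s => [//|i s IH] /= H.
apply: HA; first by apply: H; left.
by apply: IH => j Hj; apply: H; right.
Qed.

Lemma mul_sumL_out A s j : (forall i, List.In i s -> A j * A i = 0) -> A j * sumL A s = 0.
Proof.
elim: s => [|i s IH] /= H; first by rewrite mulr0.
rewrite mulrDr H; last by left.
by rewrite IH ?add0r // => i' Hi'; apply: H; right.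
Qed.

Lemma mul_sumL_in A s j : List.NoDup s -> List.In j s ->
  (forall i, List.In i s -> i <> j -> A j * A i = 0) -> A j * A j = A j ->
  A j * sumL A s = A j.
Proof.
elim: s => [//|i s IH] /= Hnd Hj H Hjj.
have [Hi Hnd'] : ~ List.In i s /\ List.NoDup s by inversion Hnd.
case: Hj => [Hij|Hj].
- subst i; rewrite mulrDr Hjj mul_sumL_out ?addr0 //.
  move=> i' Hi'; apply: H; first by right.
  by move=> E; apply: Hi; rewrite -E.
- rewrite mulrDr H; last by move=> E; apply: Hi; rewrite E.
  + by rewrite add0r IH // => i' Hi' Hne; apply: H => //; right.
  + by left.
Qed.

End SumL.

Section Construct.
Variables (K : fieldType) (R : comAlgType K).
Variables (W : Type) (lt : W -> W -> Prop) (wf : well_founded lt).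
Hypothesis Hsto : strict_total_order lt.
Hypothesis Hvnr : von_neumann_regular R.
Local Notation S := (@socle_seq K R W lt wf).
Local Notation T := (@T K R W lt wf).
Local Notation atomic := (@atomic K R W lt wf).
Hypothesis Hlay : forall w, exists (L : Type) (phi : R -> L -> K),
      inhabited L /\ (exists e : L -> nat, injective e) /\ layer_iso wf w phi.

Variables (w : W) (e : R).
Hypothesis He : atomic w e.
Variables (I : Type) (inhI : inhabited I) (valid : I -> Prop) (lev : I -> W).
Hypothesis Hlev : forall i, valid i -> lt (lev i) w.
Variable code : I -> nat.
Hypothesis Hcode : injective code.
Variable g : nat -> R.
Hypothesis Hg1 : forall k, g k = 0 \/ exists u, atomic u (g k).
Hypothesis Habs : forall k r (F : list I), S w (g k) -> (g k * r) * (g k * r) = g k * r ->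
  exists i, valid i /\ ~ List.In i F /\ (S (lev i) (g k * r) \/ atomic (lev i) (g k * r)).

Definition st := (list I * (I -> R))%type.
Definition Pof (x : st) : R := sumL x.2 x.1.
Definition upd (A : I -> R) i p : I -> R :=
  fun j => if excluded_middle_informative (j = i) then p else A j.
Definition piece (x : st) i gg : R :=
  if excluded_middle_informative (atomic (lev i) gg) then gg
  else gg + epsilon (inhabits (0 : R))
         (fun h => atomic (lev i) h /\ h * (e * (1 - Pof x) * (1 - gg)) = h).
Definition assign (x : st) i gg : st := (cons i x.1, upd x.2 i (piece x i gg)).
Definition absorb k (x : st) : st :=
  let gg := g k * (e * (1 - Pof x)) in
  if excluded_middle_informative (S w (g k)) then
    assign x (epsilon inhI (fun i => valid i /\ ~ List.In i x.1 /\
                                   (S (lev i) gg \/ atomic (lev i) gg))) gg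
  else x.
Definition fill k (x : st) : st :=
  let i := epsilon inhI (fun i => code i = k /\ valid i) in
  if excluded_middle_informative (code i = k /\ valid i /\ ~ List.In i x.1) then assign x i 0
  else x.
Fixpoint stt k : st :=
  match k with 0 => (nil, fun _ => 0) | k'.+1 => fill k' (absorb k' (stt k')) end.

Definition Inv (x : st) : Prop :=
  List.NoDup x.1 /\
  (forall i, List.In i x.1 -> valid i /\ atomic (lev i) (x.2 i) /\ x.2 i * e = x.2 i) /\
  (forall i j, List.In i x.1 -> List.In j x.1 -> i <> j -> x.2 i * x.2 j = 0).

Definition stable (x x' : st) : Prop :=
  forall j, List.In j x.1 -> List.In j x'.1 /\ x'.2 j = x.2 j.

Lemma upd_eq A i p : upd A i p i = p.
Proof. by rewrite /upd; case: excluded_middle_informative. Qed.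
Lemma upd_neq A i p j : j <> i -> upd A i p j = A j.
Proof. by rewrite /upd; case: excluded_middle_informative. Qed.

Lemma He_idem : e * e = e.
Proof. by case: He. Qed.

Lemma Inv_P x : Inv x -> [/\ Pof x * Pof x = Pof x, S w (Pof x), Pof x * e = Pof x &
   forall i, List.In i x.1 -> x.2 i * Pof x = x.2 i].
Proof.
move=> [Hnd [H1 H2]].
have Hin : forall i, List.In i x.1 -> x.2 i * Pof x = x.2 i.
  move=> i Hi; apply: mul_sumL_in => //.
  - by move=> j Hj Hne; apply: H2 => // E; apply: Hne.
  - by have [_ [[]]] := H1 i Hi.
split => //.
- by apply: sumL_mulr.
- have [H0 [HA _]] := S_ideal R wf Hsto w.
  apply: sumL_ideal => // i Hi.
  have [Hv [Ha _]] := H1 i Hi.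
  exact: (T_S Hsto (Hlev Hv) (atomic_T Ha)).
- by apply: sumL_mulr => i Hi; have [_ [_ ->]] := H1 i Hi.
Qed.

Lemma stable_P x x' : Inv x -> Inv x' -> stable x x' -> Pof x * Pof x' = Pof x.
Proof.
move=> Hx Hx' Hst.
have -> : Pof x = sumL x'.2 x.1.
  by apply: sumL_ext => i Hi; rewrite (proj2 (Hst i Hi)).
apply: sumL_mulr => i Hi.
have [_ _ _ H] := Inv_P Hx'.
by apply: H; exact: (proj1 (Hst i Hi)).
Qed.

Lemma assign_ok x i gg : Inv x -> valid i -> ~ List.In i x.1 -> gg * gg = gg -> S w gg ->
  gg * (e * (1 - Pof x)) = gg -> (S (lev i) gg \/ atomic (lev i) gg) ->
  [/\ Inv (assign x i gg), gg * Pof (assign x i gg) = gg & stable x (assign x i gg)].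
Proof.
move=> Hx Hv Hni Hgg HSg Hgle Hor.
have [HPi HSP HPe HAP] := Inv_P Hx.
have Hf : atomic w (e * (1 - Pof x) * (1 - gg)).
  apply: (atomic_sub Hsto _ Hgg HSg); exact: (atomic_sub Hsto He HPi HSP).
have [h [Hh Hhf]] := below Hsto Hvnr Hlay Hf (Hlev Hv).
have Hgge : gg * e = gg.
  rewrite -Hgle; have -> : gg * (e * (1 - Pof x)) * e = gg * ((e * e) * (1 - Pof x)) by ring.
  by rewrite He_idem.
have HggP : gg * Pof x = 0.
  rewrite -Hgle; have -> : gg * (e * (1 - Pof x)) * Pof x = gg * e * (Pof x - Pof x * Pof x) by ring.
  by rewrite HPi subrr mulr0.
have Hp : [/\ atomic (lev i) (piece x i gg), piece x i gg * e = piece x i gg,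
              piece x i gg * Pof x = 0 & gg * piece x i gg = gg].
  rewrite /piece; case: excluded_middle_informative => Ha; first by split.
  have HE := epsilon_spec (inhabits (0:R))
    (fun h => atomic (lev i) h /\ h * (e * (1 - Pof x) * (1 - gg)) = h)
    (ex_intro _ h (conj Hh Hhf)).
  set h' := epsilon _ _ in HE *.
  case: HE => Hh' Hh'f.
  have HSg' : S (lev i) gg by case: Hor.
  have Hh'g : h' * gg = 0.
    rewrite -Hh'f; have -> : h' * (e * (1 - Pof x) * (1 - gg)) * gg =
       h' * (e * (1 - Pof x)) * (gg - gg * gg) by ring.
    by rewrite Hgg subrr mulr0.
  split.
  - rewrite addrC; exact: (atomic_add Hsto Hh' HSg' Hgg Hh'g).
  - rewrite mulrDl Hgge; congr (_ + _).
    rewrite -{1}Hh'f; have -> : h' * (e * (1 - Pof x) * (1 - gg)) * e =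
       h' * ((e * e) * (1 - Pof x) * (1 - gg)) by ring.
    by rewrite He_idem Hh'f.
  - rewrite mulrDl HggP add0r -Hh'f.
    have -> : h' * (e * (1 - Pof x) * (1 - gg)) * Pof x =
       h' * e * (1 - gg) * (Pof x - Pof x * Pof x) by ring.
    by rewrite HPi subrr mulr0.
  - by rewrite mulrDr Hgg mulrC Hh'g addr0.
case: Hp => Hpa Hpe HpP Hgp.
set p := piece x i gg in Hpa Hpe HpP Hgp *.
have Hupd : forall j, List.In j x.1 -> upd x.2 i p j = x.2 j.
  by move=> j Hj; apply: upd_neq => E; apply: Hni; rewrite -E.
have HPof : Pof (assign x i gg) = p + Pof x.
  rewrite /Pof /assign /= upd_eq; congr (_ + _); exact: sumL_ext.
have HAp : forall j, List.In j x.1 -> x.2 j * p = 0.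
  move=> j Hj; rewrite -(HAP j Hj) -mulrA [Pof x * p]mulrC HpP mulr0 //.
have [Hnd [H1 H2]] := Hx.
split.
- split; first exact: List.NoDup_cons.
  split.
  + move=> j /= [<-|Hj]; first by rewrite upd_eq.
    by rewrite Hupd //; apply: H1.
  + move=> j j' /= [<-|Hj] [<-|Hj'] Hne //.
    * by rewrite upd_eq Hupd // mulrC HAp.
    * by rewrite upd_eq Hupd // HAp.
    * by rewrite !Hupd //; apply: H2.
- by rewrite HPof mulrDr Hgp HggP addr0.
- by move=> j Hj; split; [right|rewrite /assign /= Hupd].
Qed.

Lemma absorb_ok k x : Inv x ->
  [/\ Inv (absorb k x), stable x (absorb k x) &
      S w (g k) -> g k * e * Pof (absorb k x) = g k * e].
Proof.
move=> Hx.
have [HPi HSP HPe HAP] := Inv_P Hx.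
rewrite /absorb; case: excluded_middle_informative => HSk; last first.
  by split => // j Hj.
set gg := g k * (e * (1 - Pof x)).
have Hgk : g k * g k = g k.
  by case: (Hg1 k) => [->|[u [H _]]]; [rewrite mulr0|].
have He1 : (e * (1 - Pof x)) * (e * (1 - Pof x)) = e * (1 - Pof x).
  by apply: idem_mul; [exact: He_idem|exact: idem_compl].
have Hgg : gg * gg = gg by apply: idem_mul.
have HSg : S w gg by exact: (ri_mulr _ (S_ideal R wf Hsto w) HSk).
have Hgle : gg * (e * (1 - Pof x)) = gg by rewrite /gg -mulrA He1.
have [i0 Hi0] := @Habs k (e * (1 - Pof x)) x.1 HSk Hgg.
have HE := epsilon_spec inhI (fun i => valid i /\ ~ List.In i x.1 /\
    (S (lev i) gg \/ atomic (lev i) gg)) (ex_intro _ i0 Hi0).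
set i := epsilon _ _ in HE *.
have [Hv [Hni Hor]] := HE.
have [HI Hgp Hst] := assign_ok Hx Hv Hni Hgg HSg Hgle Hor.
split => // _.
have HPP := stable_P Hx HI Hst.
have -> : g k * e = gg + g k * e * Pof x.
  rewrite /gg; have -> : g k * (e * (1 - Pof x)) + g k * e * Pof x = g k * e by ring.
  by [].
by rewrite mulrDl Hgp -mulrA HPP.
Qed.

Lemma fill_ok k x : Inv x ->
  [/\ Inv (fill k x), stable x (fill k x) &
      forall i, code i = k -> valid i -> List.In i (fill k x).1].
Proof.
move=> Hx.
have [HPi HSP HPe HAP] := Inv_P Hx.
rewrite /fill; set i := epsilon _ _.
case: excluded_middle_informative => Hc; last first.
  split => // j Hj Hv.
  have Hi : code i = k /\ valid i.
    exact: (epsilon_spec inhI (fun i => code i = k /\ valid i) (ex_intro _ j (conj Hj Hv))).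
  have Eij : i = j by apply: Hcode; rewrite Hj; case: Hi.
  apply: NNPP => Hn; apply: (Hc); split; first by case: Hi.
  split; first by case: Hi.
  by rewrite Eij.
case: Hc => Hck [Hv Hni].
have HS0 : S w 0 by exact: (ri_0 (S_ideal R wf Hsto w)).
have HS0' : S (lev i) 0 by exact: (ri_0 (S_ideal R wf Hsto (lev i))).
have [HI _ Hst] := assign_ok Hx Hv Hni (mulr0 0) HS0 (mul0r _) (or_introl HS0').
split => // j Hj Hvj.
have -> : j = i by apply: Hcode; rewrite Hj.
by left.
Qed.

Lemma stt_ok k : Inv (stt k).
Proof.
elim: k => [|k IH] /=.
  split; first exact: List.NoDup_nil.
  by split.
have [H1 _ _] := absorb_ok k IH.
by have [H2 _ _] := fill_ok k H1.
Qed.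

Lemma stable_trans x y z : stable x y -> stable y z -> stable x z.
Proof.
move=> H1 H2 j Hj; have [Hj' E1] := H1 j Hj; have [Hj'' E2] := H2 j Hj'.
by split => //; rewrite E2.
Qed.

Lemma stt_step k : stable (stt k) (stt k.+1).
Proof.
have [H1 Hs1 _] := absorb_ok k (stt_ok k).
have [_ Hs2 _] := fill_ok k H1.
rewrite /=; exact: (stable_trans Hs1 Hs2).
Qed.

Lemma stt_mono k k' : (k <= k')%N -> stable (stt k) (stt k').
Proof.
elim: k' => [|k' IH]; first by rewrite leqn0 => /eqP ->; move=> j Hj.
rewrite leq_eqVlt ltnS => /orP [/eqP ->|H]; first by move=> j Hj.
exact: (stable_trans (IH H) (@stt_step k')).
Qed.

Lemma stt_absorbed k : S w (g k) -> g k * e * Pof (stt k.+1) = g k * e.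
Proof.
move=> HS.
have [H1 Hs1 H3] := absorb_ok k (stt_ok k).
have [H4 Hs2 _] := fill_ok k H1.
have := stable_P H1 H4 Hs2 => HPP.
rewrite /= -(H3 HS) -mulrA HPP.
by rewrite H3.
Qed.

Lemma stt_filled i : valid i -> List.In i (stt (code i).+1).1.
Proof.
move=> Hv.
have [H1 _ _] := absorb_ok (code i) (stt_ok (code i)).
have [_ _ H] := fill_ok (code i) H1.
exact: H.
Qed.

Lemma in_le_sum k (ks : list nat) : List.In k ks -> (k <= foldr addn 0 ks)%N.
Proof.
elim: ks => [//|a ks IH] /= [->|H]; first exact: leq_addr.
by apply: leq_trans (IH H) _; exact: leq_addl.
Qed.

Lemma construct :
  (forall x, S w x -> exists ks : list nat,
      (forall k, List.In k ks -> S w (g k)) /\ x = x * join (List.map g ks)) ->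
  exists E : I -> R,
    (forall i, valid i -> atomic (lev i) (E i) /\ E i * e = E i) /\
    (forall i j, valid i -> valid j -> i <> j -> E i * E j = 0) /\
    (forall x, S w x -> exists s : list I, (forall i, List.In i s -> valid i) /\
        List.NoDup s /\ x * e = x * e * sumL E s).
Proof.
move=> Hcov.
pose E i := (stt (code i).+1).2 i.
have Estab : forall i k, valid i -> List.In i (stt k).1 -> E i = (stt k).2 i.
  move=> i k Hv Hk; have HN := stt_filled Hv.
  case: (leqP (code i).+1 k) => H.
  - by rewrite (proj2 (stt_mono H HN)).
  - by rewrite /E (proj2 (stt_mono (ltnW H) Hk)).
exists E; split.
  move=> i Hv; have [_ [H _]] := stt_ok (code i).+1.
  by have [_ H'] := H i (stt_filled Hv).
split.
  move=> i j Hi Hj Hne.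
  set M := maxn (code i).+1 (code j).+1.
  have HiM := proj1 (stt_mono (leq_maxl (code i).+1 (code j).+1) (stt_filled Hi)).
  have HjM := proj1 (stt_mono (leq_maxr (code i).+1 (code j).+1) (stt_filled Hj)).
  rewrite (Estab i M Hi HiM) (Estab j M Hj HjM).
  have [_ [_ H]] := stt_ok M.
  exact: H.
move=> x Hx.
have [ks [Hks Hxj]] := Hcov x Hx.
set M := (foldr addn 0 ks).+1.
have [Hnd [HM _]] := stt_ok M.
have [HPi HSP HPe HAP] := Inv_P (stt_ok M).
set PM := Pof (stt M) in HPi HSP HPe HAP *.
exists (stt M).1; split; first by move=> i Hi; case: (HM i Hi).
split => //.
have -> : sumL E (stt M).1 = PM.
  rewrite /PM /Pof; apply: sumL_ext => i Hi.
  by apply: Estab => //; case: (HM i Hi).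
have Hgk : forall k, List.In k ks -> g k * e * PM = g k * e.
  move=> k Hk.
  have Hle : (k.+1 <= M)%N by rewrite ltnS; exact: in_le_sum.
  have HPP := stable_P (stt_ok k.+1) (stt_ok M) (stt_mono Hle).
  by rewrite -(stt_absorbed (Hks k Hk)) -mulrA HPP.
set Q := 1 - e + PM.
have HJQ : join (List.map g ks) * Q = join (List.map g ks).
  apply: join_le => b /List.in_map_iff [k [<- Hk]].
  have E1 : g k * PM = g k * e * PM by rewrite -{1}HPe; ring.
  rewrite /Q; have -> : g k * (1 - e + PM) = g k - g k * e + g k * PM by ring.
  by rewrite E1 Hgk // subrK.
set J := join (List.map g ks) in Hxj HJQ *.
have HJP : J * PM = J * e.
  have : J * Q * e = J * e by rewrite HJQ.
  rewrite /Q; have -> : J * (1 - e + PM) * e = J * (e - e * e) + J * (PM * e) by ring.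
  by rewrite He_idem HPe subrr mulr0 add0r.
rewrite {1 2}Hxj; have -> : x * J * e * PM = x * (J * (PM * e)) by ring.
by rewrite HPe HJP mulrA.
Qed.

End Construct.

Section Assembly.
Variables (K : fieldType) (R : comAlgType K).
Variables (W : Type) (lt : W -> W -> Prop) (wf : well_founded lt).
Hypothesis Hsto : strict_total_order lt.
Hypothesis Hvnr : von_neumann_regular R.
Local Notation S := (@socle_seq K R W lt wf).
Local Notation T := (@T K R W lt wf).
Local Notation atomic := (@atomic K R W lt wf).
Local Notation Bscal := (@Bscal K W lt wf).
Local Notation Bset := (@Bset K W lt wf).
Local Notation El := (El K W).
Hypothesis Hlay : forall w, exists (L : Type) (phi : R -> L -> K),
      inhabited L /\ (exists e : L -> nat, injective e) /\ layer_iso wf w phi.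

Definition iso_at (v : W) (e : R) (F : R -> El) : Prop :=
  (forall x, Bset v (F x)) /\
  (forall y, Bset v y -> exists x, F x = y) /\
  (forall x y, F x = F y -> x * e = y * e) /\
  (forall x, F x = F (x * e)) /\
  (forall x y, F (x + y) = el_add (F x) (F y)) /\
  (forall x y, F (x * y) = el_mul (F x) (F y)) /\
  (forall c x, F (c *: x) = el_scale c (F x)) /\
  Bscal v 1 (F e).

Variables (w : W) (e : R).
Hypothesis He : atomic w e.
Hypothesis Hnm : ~ is_min lt w.
Variables (I : Type) (valid : I -> Prop) (lev : I -> W).
Hypothesis Hlev : forall i, valid i -> lt (lev i) w.
Variable E : I -> R.
Hypothesis HE1 : forall i, valid i -> atomic (lev i) (E i) /\ E i * e = E i.
Hypothesis HE2 : forall i j, valid i -> valid j -> i <> j -> E i * E j = 0.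
Hypothesis HE3 : forall x, S w x -> exists s : list I, (forall i, List.In i s -> valid i) /\
        List.NoDup s /\ x * e = x * e * sumL E s.
Variable F : I -> R -> El.
Hypothesis HF : forall i, valid i -> iso_at (lev i) (E i) (F i).

Lemma He_idem' : e * e = e.
Proof. by case: He. Qed.

Lemma E_idem i : valid i -> E i * E i = E i.
Proof. by move=> Hv; case: (HE1 Hv) => [[H _] _]. Qed.

Lemma eE i : valid i -> e * E i = E i.
Proof. by move=> Hv; rewrite mulrC; case: (HE1 Hv). Qed.

Lemma F_E i x : valid i -> F i x = F i (x * E i).
Proof. by move=> Hv; have [_ [_ [_ [H _]]]] := HF Hv; apply: H. Qed.

Lemma F_inj i x y : valid i -> F i x = F i y -> x * E i = y * E i.
Proof. by move=> Hv; have [_ [_ [H _]]] := HF Hv; apply: H. Qed.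

Lemma F_one i : valid i -> Bscal (lev i) 1 (F i (E i)).
Proof. by move=> Hv; have [_ [_ [_ [_ [_ [_ [_ H]]]]]]] := HF Hv. Qed.

Lemma F_scale i c x : valid i -> F i (c *: x) = el_scale c (F i x).
Proof. by move=> Hv; have [_ [_ [_ [_ [_ [_ [H _]]]]]]] := HF Hv; apply: H. Qed.

Lemma sumL_out s j : valid j -> (forall i, List.In i s -> valid i) -> ~ List.In j s ->
  forall B : I -> R, sumL (fun i => B i * E i) s * E j = 0.
Proof.
move=> Hj Hs Hn B; elim: s Hs Hn => [|i s IH] /= Hs Hn; first by rewrite mul0r.
rewrite mulrDl IH; last by move=> H; apply: Hn; right.
  rewrite addr0 -mulrA HE2 ?mulr0 //; first by apply: Hs; left.
  by move=> E'; apply: Hn; left.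
by move=> i' Hi'; apply: Hs; right.
Qed.

Lemma sumL_in s j : valid j -> (forall i, List.In i s -> valid i) -> List.NoDup s -> List.In j s ->
  forall B : I -> R, sumL (fun i => B i * E i) s * E j = B j * E j.
Proof.
move=> Hj Hs Hnd Hin B; elim: s Hs Hnd Hin => [//|i s IH] /= Hs Hnd Hin.
have [Hi Hnd'] : ~ List.In i s /\ List.NoDup s by inversion Hnd.
case: Hin => [Eij|Hin].
- subst i; rewrite mulrDl -mulrA E_idem // sumL_out ?addr0 //.
  by move=> i' Hi'; apply: Hs; right.
- rewrite mulrDl IH //; last by move=> i' Hi'; apply: Hs; right.
  rewrite -mulrA HE2 ?mulr0 ?add0r //; first by apply: Hs; left.
  by move=> E'; apply: Hi; rewrite E'.
Qed.

Lemma sumL_props s : (forall i, List.In i s -> valid i) -> List.NoDup s ->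
  [/\ sumL E s * sumL E s = sumL E s, sumL E s * e = sumL E s & S w (sumL E s)].
Proof.
move=> Hs Hnd.
have Hin : forall i, List.In i s -> E i * sumL E s = E i.
  move=> i Hi; apply: mul_sumL_in => //.
  - by move=> j Hj Hne; apply: HE2; [apply: Hs|apply: Hs|move=> E'; apply: Hne].
  - by apply: E_idem; apply: Hs.
split.
- by apply: sumL_mulr.
- by apply: sumL_mulr => i Hi; case: (HE1 (Hs i Hi)).
- have [H0 [HA _]] := S_ideal R wf Hsto w.
  apply: sumL_ideal => // i Hi.
  have Hv := Hs i Hi.
  exact: (T_S Hsto (Hlev Hv) (atomic_T (proj1 (HE1 Hv)))).
Qed.

Lemma zero_sumL z s : (forall i, List.In i s -> z * E i = 0) -> z * sumL E s = 0.
Proof.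
elim: s => [|i s IH] /= H; first by rewrite mulr0.
by rewrite mulrDr H ?IH ?add0r // => [j Hj|]; [apply: H; right|left].
Qed.

Lemma G1 x : exists c (s : list I), forall i, valid i -> ~ List.In i s -> Bscal (lev i) c (F i x).
Proof.
have [_ [_ [_ Hat]]] := He.
have [c Hc] := Hat x.
have [s [Hs [Hnd Hcov]]] := HE3 Hc.
exists c, s => i Hv Hn.
have Hy : (x * e - c *: e) * e = x * e - c *: e.
  by rewrite mulrBl -scalerAl -mulrA He_idem'.
rewrite Hy in Hcov.
have H0 : (x * e - c *: e) * E i = 0.
  rewrite Hcov -mulrA.
  have -> : sumL E s = sumL (fun i => 1 * E i) s by apply: sumL_ext => j _; rewrite mul1r.
  by rewrite sumL_out // mulr0.
have Hxi : x * E i = c *: E i.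
  apply/eqP; rewrite -subr_eq0; apply/eqP; rewrite -H0 mulrBl -scalerAl.
  by rewrite -mulrA !eE.
rewrite (F_E x Hv) Hxi F_scale //.
by have := Bscal_scale Hsto c (F_one Hv); rewrite mulr1.
Qed.

Lemma G4 i x : valid i -> F i x = F i (x * e).
Proof. by move=> Hv; rewrite (F_E x Hv) (F_E (x * e) Hv) -mulrA eE. Qed.

Lemma G2 x y : (forall i, valid i -> F i x = F i y) -> x * e = y * e.
Proof.
move=> H.
set z := (x - y) * e.
have Hz : forall i, valid i -> z * E i = 0.
  move=> i Hv; have := F_inj Hv (H i Hv) => Hxy.
  by rewrite /z -mulrA eE // mulrBl Hxy subrr.
have [_ [_ [_ Hat]]] := He.
have [c Hc] := Hat (x - y).
have [s [Hs [Hnd Hcov]]] := HE3 Hc.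
have [HPi HPe HSP] := sumL_props Hs Hnd.
have Hze : z * e = z by rewrite /z -mulrA He_idem'.
have Hy : ((x - y) * e - c *: e) * e = z - c *: e.
  by rewrite mulrBl -scalerAl He_idem' Hze.
rewrite Hy in Hcov.
have HzP : z * sumL E s = 0 by apply: zero_sumL => i Hi; apply: Hz; apply: Hs.
have Ez : z = c *: (e * (1 - sumL E s)).
  have : z - c *: e = - (c *: sumL E s).
    by rewrite {1}Hcov mulrBl HzP sub0r -scalerAl mulrC HPe.
  move/eqP; rewrite subr_eq => /eqP ->.
  by rewrite mulrBr mulr1 mulrC HPe scalerBr addrC.
case: (eqVneq c 0) => [Hc0|Hc0].
  by apply/eqP; rewrite -subr_eq0 -mulrBl; apply/eqP; rewrite -/z Ez Hc0 scale0r.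
exfalso.
have Hf : atomic w (e * (1 - sumL E s)) by exact: (atomic_sub Hsto He HPi HSP).
have [u Hu] : exists u, lt u w.
  apply: NNPP => Hn; apply: Hnm => u Hu; apply: Hn; by exists u.
have [h [Hh Hhf]] := below Hsto Hvnr Hlay Hf Hu.
have HSh : S w h by exact: (T_S Hsto Hu (atomic_T Hh)).
have [s' [Hs' [Hnd' Hcov']]] := HE3 HSh.
have Hhe : h * e = h.
  rewrite -Hhf; have -> : h * (e * (1 - sumL E s)) * e = h * ((e * e) * (1 - sumL E s)) by ring.
  by rewrite He_idem'.
rewrite Hhe in Hcov'.
have HzP' : z * sumL E s' = 0 by apply: zero_sumL => i Hi; apply: Hz; apply: Hs'.
have : z * h = c *: h by rewrite Ez -scalerAl mulrC Hhf.
rewrite Hcov' mulrA [z * h]mulrC -mulrA HzP' mulr0 => /esym /eqP.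
rewrite scaler_eq0 (negbTE Hc0) /= => /eqP Hh0.
rewrite -Hcov' in Hh0; exact: (atomic_ne0 Hsto Hh Hh0).
Qed.

Lemma nodup_valid (s : list I) : exists s' : list I, List.NoDup s' /\
  forall i, List.In i s' <-> List.In i s /\ valid i.
Proof.
elim: s => [|a s [s' [Hnd Hs']]].
  exists nil; split; first exact: List.NoDup_nil.
  by move=> i; split => // [[]].
case: (classic (valid a /\ ~ List.In a s')) => [[Ha Hn]|Hn].
- exists (cons a s'); split; first exact: List.NoDup_cons.
  move=> i /=; split.
  + by case=> [<-|/Hs' [H1 H2]]; split => //; [left|right].
  + by case=> [[<-|Hi] Hv]; [left|right; apply/Hs'].
- exists s'; split => // i; split.
  + by move/Hs' => [H1 H2]; split => //; right.
  + move=> [/= [Ei|Hi] Hv]; last by apply/Hs'.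
    subst a; apply: NNPP => Hi; apply: Hn; by split.
Qed.

Lemma G3 (y : I -> El) : (forall i, valid i -> Bset (lev i) (y i)) ->
  (exists c (s : list I), forall i, valid i -> ~ List.In i s -> Bscal (lev i) c (y i)) ->
  exists x, forall i, valid i -> F i x = y i.
Proof.
move=> Hy [c [s Hs]].
have [xi Hxi] : exists xi : I -> R, forall i, valid i -> F i (xi i) = y i.
  apply: (ClassicalEpsilon.choice (fun i x => valid i -> F i x = y i)) => i.
  case: (classic (valid i)) => Hv; last by exists 0.
  have [_ [Hs' _]] := HF Hv.
  have [x Hx] := Hs' _ (Hy i Hv).
  by exists x.
have [s' [Hnd Hs']] := nodup_valid s.
have Hs'v : forall i, List.In i s' -> valid i by move=> i /Hs' [].
exists (c *: e + sumL (fun i => (xi i - sA c) * E i) s') => j Hj.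
rewrite (F_E _ Hj) mulrDl -scalerAl eE //.
case: (classic (List.In j s')) => Hin.
- rewrite sumL_in // scaleE; have -> : sA c * E j + (xi j - sA c) * E j = xi j * E j by ring.
  by rewrite -F_E // Hxi.
- rewrite sumL_out // addr0 F_scale //.
  have := Bscal_scale Hsto c (F_one Hj); rewrite mulr1 => H1.
  apply: (Bscal_fun Hsto H1).
  apply: Hs => // Hjs; apply: Hin; apply/Hs'; by split.
Qed.

End Assembly.

Section Induction.
Variables (K : fieldType) (R : comAlgType K).
Variables (W : Type) (lt : W -> W -> Prop) (wf : well_founded lt).
Hypothesis Hsto : strict_total_order lt.
Hypothesis Hvnr : von_neumann_regular R.
Local Notation S := (@socle_seq K R W lt wf).
Local Notation T := (@T K R W lt wf).
Local Notation atomic := (@atomic K R W lt wf).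
Local Notation Bscal := (@Bscal K W lt wf).
Local Notation Bset := (@Bset K W lt wf).
Local Notation El := (El K W).
Local Notation Leaf := (@Leaf K W).
Local Notation iso_at := (@iso_at K R W lt wf).
Hypothesis Hlay : forall w, exists (L : Type) (phi : R -> L -> K),
      inhabited L /\ (exists e : L -> nat, injective e) /\ layer_iso wf w phi.
Hypothesis Hcnt : exists e : W -> nat, injective e.

Lemma min_case w e : is_min lt w -> atomic w e -> exists F, iso_at w e F.
Proof.
move=> Hm [He [HT [HnS Hat]]].
have Hx : forall x, exists c, x * e = c *: e.
  move=> x; have [c Hc] := Hat x; exists c.
  by move/(S_min wf _ Hm): Hc => /eqP; rewrite subr_eq0 => /eqP.
have Hne : e != 0.
  apply/eqP => H; apply: HnS; rewrite H; exact/(S_min wf _ Hm).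
have Huniq : forall c d, c *: e = d *: e -> c = d.
  move=> c d /eqP; rewrite -subr_eq0 -scalerBl scaler_eq0 (negbTE Hne) orbF subr_eq0.
  by move/eqP.
pose coef x := epsilon (inhabits (0:K)) (fun c => x * e = c *: e).
have Hcoef : forall x, x * e = coef x *: e by move=> x; exact: epsilon_spec (Hx x).
have Hceq : forall x c, x * e = c *: e -> coef x = c.
  by move=> x c H; apply: Huniq; rewrite -Hcoef.
exists (fun x => Leaf (coef x)); split.
  by move=> x; apply/(Bset_min wf _ Hm); exists (coef x).
split.
  move=> y /(Bset_min wf _ Hm) [k ->]; exists (k *: 1); congr Defs.Leaf.
  by apply: Hceq; rewrite -scalerAl mul1r.
split.
  by move=> x y [H]; rewrite Hcoef H -Hcoef.
split.
  by move=> x; congr Defs.Leaf; apply/esym/Hceq; rewrite -mulrA He Hcoef.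
split.
  by move=> x y /=; congr Defs.Leaf; apply: Hceq; rewrite mulrDl !Hcoef scalerDl.
split.
  move=> x y /=; congr Defs.Leaf; apply: Hceq.
  have -> : x * y * e = (x * e) * (y * e) by rewrite -{1}He; ring.
  rewrite !Hcoef !scaleE sA_mul; have -> : sA (coef x) * e * (sA (coef y) * e) =
    sA (coef x) * sA (coef y) * (e * e) by ring.
  by rewrite He.
split.
  by move=> c x /=; congr Defs.Leaf; apply: Hceq; rewrite -scalerAl Hcoef scalerA.
apply/(Bscal_min wf _ _ Hm); congr Defs.Leaf; apply: Hceq; by rewrite He scale1r.
Qed.

Lemma cover_gen (g : nat -> R) w :
  (forall u x, T u x -> exists ks : seq nat,
      (forall k, List.In k ks -> T u (g k)) /\ x = x * join (List.map g ks)) ->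
  ~ is_min lt w ->
  forall x, S w x -> exists ks : list nat,
      (forall k, List.In k ks -> S w (g k)) /\ x = x * join (List.map g ks).
Proof.
move=> Hg2 Hnm x Hx.
case: (S_low Hsto Hx) => [[Hm _]//|[u [Hu HTu]]].
have [ks [Hks Hxk]] := Hg2 u x HTu.
exists ks; split => // k Hk; exact: (T_S Hsto Hu (Hks k Hk)).
Qed.

Lemma succ_case w v e : imm_pred lt v w -> atomic w e ->
  (forall f, atomic v f -> exists F, iso_at v f F) -> exists G, iso_at w e G.
Proof.
move=> Hp He IH.
have Hnm := succ_not_min Hp.
have [g [Hg1 Hg2]] := gens Hsto Hvnr Hlay Hcnt.
have Hcov := cover_gen Hg2 Hnm.
have Hlev : forall i : nat, True -> lt ((fun _ : nat => v) i) w by move=> _ _; case: Hp.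
have Hcode : injective (fun i : nat => i) by [].
have Habs : forall k r (F : list nat), S w (g k) -> (g k * r) * (g k * r) = g k * r ->
  exists i, True /\ ~ List.In i F /\
    (S ((fun _ : nat => v) i) (g k * r) \/ atomic ((fun _ : nat => v) i) (g k * r)).
  move=> k r F HSk Hid; exists (foldr addn 0 F).+1; split => //; split.
    by move/in_le_sum; rewrite ltnn.
  have HSv := S_ideal R wf Hsto v.
  case: (Hg1 k) => [->|[u Hu]]; first by left; rewrite mul0r; exact: (ri_0 HSv).
  case: (lt_tot Hsto u v) => [h|[h|h]].
  - by left; apply: (ri_mulr _ HSv); exact: (T_S Hsto h (atomic_T Hu)).
  - by subst u; exact: (atomic_mul Hsto Hu Hid).
  - exfalso; have [_ [_ [HnS _]]] := Hu; apply: HnS.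
    by apply: (T_S Hsto h); apply/(S_succ wf Hsto _ Hp).
have [E [HE1 [HE2 HE3]]] := construct Hsto Hvnr Hlay He (inhabits 0%N) (valid := fun _ => True)
   (lev := fun _ => v) Hlev Hcode Hg1 Habs Hcov.
have [Fs HFs] : exists Fs : nat -> R -> El, forall i, True -> iso_at v (E i) (Fs i).
  apply: (ClassicalEpsilon.choice (fun i F => True -> iso_at v (E i) F)) => i.
  have [F HF] := IH _ (proj1 (HE1 i I)); by exists F.
have HG1 := G1 Hsto He HE1 HE2 HE3 HFs.
have HG2 := G2 Hsto Hvnr Hlay He Hnm Hlev HE1 HE2 HE3 HFs.
have HG3 := G3 Hsto HE1 HE2 HFs.
have HG4 := G4 HE1 HFs.
exists (fun x => NodeN (fun m => Fs m x)); split.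
  move=> x; apply/(Bset_succ wf Hsto _ Hp); exists (fun m => Fs m x); split => //; split.
    by move=> m; have [H _] := HFs m I; apply: H.
  have [c [s Hcs]] := HG1 x; exists c, s => m Hm; exact: Hcs.
split.
  move=> y /(Bset_succ wf Hsto _ Hp) [f [-> [Hf [c [s Hcs]]]]].
  have [x Hx] := HG3 f (fun m _ => Hf m) (ex_intro _ c (ex_intro _ s (fun m _ Hm => Hcs m Hm))).
  by exists x; congr NodeN; apply: functional_extensionality => m; apply: Hx.
split.
  move=> x y [H]; apply: HG2 => i _.
  exact: (equal_f H i).
split.
  by move=> x; congr NodeN; apply: functional_extensionality => m; apply: HG4.
split.
  move=> x y /=; congr NodeN; apply: functional_extensionality => m.
  by have [_ [_ [_ [_ [H _]]]]] := HFs m I; apply: H.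
split.
  move=> x y /=; congr NodeN; apply: functional_extensionality => m.
  by have [_ [_ [_ [_ [_ [H _]]]]]] := HFs m I; apply: H.
split.
  move=> c x /=; congr NodeN; apply: functional_extensionality => m.
  by have [_ [_ [_ [_ [_ [_ [H _]]]]]]] := HFs m I; apply: H.
apply/(Bscal_succ wf Hsto _ _ Hp); exists (fun m => Fs m e); split => // m.
have [_ [_ [_ [H [_ [_ [_ H1]]]]]]] := HFs m I.
by rewrite H [e * E m]mulrC (proj2 (HE1 m I)).
Qed.

Lemma fresh_lim w : is_limit lt w -> forall (F : list W) u0, lt u0 w ->
  exists u, lt u0 u /\ lt u w /\ ~ List.In u F.
Proof.
move=> Hl; elim=> [|a F IH] u0 Hu0.
  by have [u [H1 H2]] := limit_between Hl Hu0; exists u; split => //; split => // /= [].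
case: (classic (lt u0 a /\ lt a w)) => [[H1 H2]|Hn].
- have [u [Hau [Huw Hn]]] := IH a H2.
  exists u; split; first exact: (lt_trans Hsto H1 Hau).
  split => //= [[Eau|//]].
  by subst a; exact: (lt_irr wf Hau).
- have [u [Hau [Huw Hn']]] := IH u0 Hu0.
  exists u; split => //; split => //= [[Eau|//]].
  by subst a; apply: Hn.
Qed.

Lemma lim_case w e : is_limit lt w -> atomic w e ->
  (forall u, lt u w -> forall f, atomic u f -> exists F, iso_at u f F) -> exists G, iso_at w e G.
Proof.
move=> Hl He IH.
have Hnm : ~ is_min lt w by case: Hl.
have [g [Hg1 Hg2]] := gens Hsto Hvnr Hlay Hcnt.
have Hcov := cover_gen Hg2 Hnm.
have [cW HcW] := Hcnt.
have Hlev : forall i : W, lt i w -> lt ((fun u : W => u) i) w by [].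
have [u0 Hu0] := not_min_ex Hnm.
have Habs : forall k r (F : list W), S w (g k) -> (g k * r) * (g k * r) = g k * r ->
  exists i, lt i w /\ ~ List.In i F /\
    (S ((fun u : W => u) i) (g k * r) \/ atomic ((fun u : W => u) i) (g k * r)).
  move=> k r F HSk Hid.
  case: (Hg1 k) => [Hz|[u Hu]].
    have [u [_ [Huw Hn]]] := fresh_lim Hl F Hu0.
    exists u; split => //; split => //; left; rewrite Hz mul0r.
    exact: (ri_0 (S_ideal R wf Hsto u)).
  have Huw : lt u w.
    apply: NNPP => Hn; have [_ [_ [HnS _]]] := Hu; apply: HnS.
    case: (lt_tot Hsto u w) => [//|[->//|h]].
    exact: (S_mono Hsto h HSk).
  have [u' [Hu' [Hu'w Hn]]] := fresh_lim Hl F Huw.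
  exists u'; split => //; split => //; left.
  apply: (ri_mulr _ (S_ideal R wf Hsto u')); exact: (T_S Hsto Hu' (atomic_T Hu)).
have [E [HE1 [HE2 HE3]]] := construct Hsto Hvnr Hlay He (inhabits w) (valid := fun u => lt u w)
   (lev := fun u => u) Hlev HcW Hg1 Habs Hcov.
have [Fs HFs] : exists Fs : W -> R -> El, forall u, lt u w -> iso_at u (E u) (Fs u).
  apply: (ClassicalEpsilon.choice (fun u F => lt u w -> iso_at u (E u) F)) => u.
  case: (classic (lt u w)) => Hu; last by exists (fun _ => Leaf 0).
  have [F HF] := IH u Hu _ (proj1 (HE1 u Hu)); by exists F.
have HG1 := G1 Hsto He HE1 HE2 HE3 HFs.
have HG2 := G2 Hsto Hvnr Hlay He Hnm Hlev HE1 HE2 HE3 HFs.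
have HG3 := G3 Hsto HE1 HE2 HFs.
have HG4 := G4 HE1 HFs.
pose sel x u := if excluded_middle_informative (lt u w) then Fs u x else Leaf 0.
have Hsel1 : forall x u, lt u w -> sel x u = Fs u x.
  by move=> x u Hu; rewrite /sel; case: excluded_middle_informative.
have Hsel2 : forall x u, ~ lt u w -> sel x u = Leaf 0.
  by move=> x u Hu; rewrite /sel; case: excluded_middle_informative.
have Hsel : forall (op : El -> El -> El) (fop : R -> R -> R),
    op (Leaf 0) (Leaf 0) = Leaf 0 ->
    (forall u, lt u w -> forall x y, Fs u (fop x y) = op (Fs u x) (Fs u y)) ->
    forall x y, (fun u => sel (fop x y) u) = (fun u => op (sel x u) (sel y u)).
  move=> op fop H0 H x y; apply: functional_extensionality => u.
  case: (classic (lt u w)) => Hu.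
  - by rewrite !Hsel1 // H.
  - by rewrite !Hsel2.
exists (fun x => NodeW (sel x)); split.
  move=> x; apply/(Bset_lim wf _ Hl); exists (sel x); split => //; split.
    by move=> u Hu; rewrite Hsel1 //; have [H _] := HFs u Hu; apply: H.
  split; first by move=> u Hu; rewrite Hsel2.
  have [c [s Hcs]] := HG1 x; exists c, s => u Hu Hn; rewrite Hsel1 //; exact: Hcs.
split.
  move=> y /(Bset_lim wf _ Hl) [f [-> [Hf [Hf' [c [s Hcs]]]]]].
  have [x Hx] := HG3 f Hf (ex_intro _ c (ex_intro _ s Hcs)).
  exists x; congr NodeW; apply: functional_extensionality => u.
  case: (classic (lt u w)) => Hu; first by rewrite Hsel1 // Hx.
  by rewrite Hsel2 // Hf'.
split.
  move=> x y [H]; apply: HG2 => u Hu.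
  by have := equal_f H u; rewrite !Hsel1.
split.
  move=> x; congr NodeW; apply: functional_extensionality => u.
  case: (classic (lt u w)) => Hu; first by rewrite !Hsel1 // HG4.
  by rewrite !Hsel2.
split.
  move=> x y /=; congr NodeW; apply: Hsel; first by rewrite /= addr0.
  by move=> u Hu; have [_ [_ [_ [_ [H _]]]]] := HFs u Hu; apply: H.
split.
  move=> x y /=; congr NodeW; apply: Hsel; first by rewrite /= mulr0.
  by move=> u Hu; have [_ [_ [_ [_ [_ [H _]]]]]] := HFs u Hu; apply: H.
split.
  move=> c x /=; congr NodeW; apply: functional_extensionality => u.
  case: (classic (lt u w)) => Hu.
  - by rewrite !Hsel1 //; have [_ [_ [_ [_ [_ [_ [H _]]]]]]] := HFs u Hu; apply: H.
  - by rewrite !Hsel2 //= mulr0.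
apply/(Bscal_lim wf _ _ Hl); exists (sel e); split => //; split.
  move=> u Hu; rewrite Hsel1 //.
  have [_ [_ [_ [H [_ [_ [_ H1]]]]]]] := HFs u Hu.
  by rewrite H [e * E u]mulrC (proj2 (HE1 u Hu)).
by move=> u Hu; rewrite Hsel2.
Qed.

Lemma iso_exists w e : atomic w e -> exists F, iso_at w e F.
Proof.
elim: (wf w) e => {}w _ IH e He.
case: (kind lt w) => [Hm|[[v Hp]|Hl]].
- exact: min_case Hm He.
- apply: (succ_case Hp He) => f Hf; exact: (IH v (proj1 Hp) f Hf).
- apply: (lim_case Hl He) => u Hu f Hf; exact: (IH u Hu f Hf).
Qed.

End Induction.

Section SumGen.
Variables (R : comRingType) (I : Type).
Implicit Types (A B : I -> R) (l : list I).

Lemma sumL_delta (f : I -> R) l m : List.NoDup l -> List.In m l ->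
  (forall j, List.In j l -> j <> m -> f j = 0) -> sumL f l = f m.
Proof.
elim: l => [//|a l IH] /= Hnd Hm H.
have [Ha Hnd'] : ~ List.In a l /\ List.NoDup l by inversion Hnd.
case: Hm => [Eam|Hm].
- subst a; rewrite (_ : sumL f l = 0) ?addr0 //.
  have Hz : forall j, List.In j l -> f j = 0.
    by move=> j Hj; apply: H; [right|move=> E; apply: Ha; rewrite -E].
  elim: (l) Hz => [//|b l0 IHl] /= Hz.
  rewrite Hz; last by left.
  by rewrite add0r IHl // => j Hj; apply: Hz; right.
- rewrite H; last by move=> E; apply: Ha; rewrite E.
    by rewrite add0r IH // => j Hj Hne; apply: H => //; right.
  by left.
Qed.

Lemma sumL_add A B l : sumL (fun j => A j + B j) l = sumL A l + sumL B l.
Proof. by elim: l => [|a l IH] /=; [rewrite addr0|rewrite IH; ring]. Qed.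

Lemma sumL_zero A l X : (forall i, List.In i l -> A i * X = 0) -> sumL A l * X = 0.
Proof.
elim: l => [|a l IH] /= H; first by rewrite mul0r.
by rewrite mulrDl H ?IH ?addr0 // => [j Hj|]; [apply: H; right|left].
Qed.

Lemma mulr_sumL x A l : x * sumL A l = sumL (fun i => x * A i) l.
Proof. by elim: l => [|a l IH] /=; [rewrite mulr0|rewrite mulrDr IH]. Qed.

Lemma sumL_in_gen A B l j : List.NoDup l -> List.In j l ->
  (forall i, List.In i l -> i <> j -> A i * A j = 0) -> A j * A j = A j ->
  sumL (fun i => B i * A i) l * A j = B j * A j.
Proof.
move=> Hnd Hj H Hjj.
have E1 : sumL (fun i => B i * A i) l * A j = sumL (fun i => B i * A i * A j) l.
  by rewrite mulrC mulr_sumL; apply: sumL_ext => i _; rewrite mulrC.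
rewrite E1 (@sumL_delta (fun i => B i * A i * A j) l j Hnd Hj).
  by rewrite -mulrA Hjj.
by move=> i Hi Hne; rewrite -mulrA H // mulr0.
Qed.

End SumGen.

Lemma In_mem (T : eqType) (x : T) (s : seq T) : x \in s -> List.In x s.
Proof. elim: s => [//|a s IH]; rewrite in_cons => /orP [/eqP ->|H]; [by left|by right; apply: IH]. Qed.

Lemma mem_In (T : eqType) (x : T) (s : seq T) : List.In x s -> x \in s.
Proof. elim: s => [//|a s IH] /= [->|H]; rewrite in_cons; [by rewrite eqxx|by rewrite IH ?orbT]. Qed.

Lemma uniq_NoDup (T : eqType) (s : seq T) : uniq s -> List.NoDup s.
Proof.
elim: s => [|a s IH] /=; first by move=> _; exact: List.NoDup_nil.
move=> /andP [Ha Hs]; apply: List.NoDup_cons; last exact: IH.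
by move/mem_In; rewrite (negbTE Ha).
Qed.

Section Top.
Variables (K : fieldType) (R : comAlgType K).
Variables (W : Type) (lt : W -> W -> Prop) (wf : well_founded lt).
Hypothesis Hsto : strict_total_order lt.
Hypothesis Hvnr : von_neumann_regular R.
Local Notation S := (@socle_seq K R W lt wf).
Local Notation T := (@T K R W lt wf).
Local Notation atomic := (@atomic K R W lt wf).
Variables (top : W) (n : nat) (phi : R -> 'I_n -> K).
Hypothesis Hphi : layer_iso wf top phi.
Hypothesis Hall : forall x, T top x.
Hypothesis Hn : (0 < n)%N.

Lemma phi_sumL (B : 'I_n -> R) l m : phi (sumL B l) m = sumL (fun j => phi (B j) m) l.
Proof.
elim: l => [|a l IH] /=.
  have := phi_scale Hphi 0 m (Hall 0); rewrite scale0r mul0r; by [].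
by rewrite (phi_add Hphi _ (Hall _) (Hall _)) IH.
Qed.

Lemma top_dec : exists es : 'I_n -> R, (forall i, atomic top (es i)) /\
  (forall i j, i <> j -> es i * es j = 0) /\ sumL es (enum 'I_n) = 1.
Proof.
have [a Ha] := ClassicalEpsilon.choice _ (lift_l Hsto Hvnr Hphi).
have HT := T_ideal R wf Hsto top.
have Hphi1 : forall m, phi 1 m = 1.
  move=> m; have [_ [H1 _]] := Ha m.
  have := phi_mul Hphi m (Hall 1) (Hall (a m)); rewrite mul1r H1 mulr1; by [].
have Hol : forall l : list 'I_n, List.NoDup l -> exists b : 'I_n -> R,
    (forall i, List.In i l -> [/\ b i * b i = b i, phi (b i) i = 1 &
                                forall m, m <> i -> phi (b i) m = 0]) /\
    (forall i j, List.In i l -> List.In j l -> i <> j -> b i * b j = 0).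
  elim=> [|i l IH] Hnd; first by exists a; split.
  have [Hi Hnd'] : ~ List.In i l /\ List.NoDup l by inversion Hnd.
  have [b' [Hb1 Hb2]] := IH Hnd'.
  set J := sumL b' l.
  have Hb'J : forall j, List.In j l -> b' j * J = b' j.
    move=> j Hj; apply: mul_sumL_in => //; last by case: (Hb1 j Hj).
    by move=> k Hk Hne; apply: Hb2 => // E; apply: Hne.
  have HJJ : J * J = J by apply: sumL_mulr.
  have HphiJ : phi J i = 0.
    rewrite /J phi_sumL; rewrite (_ : sumL _ l = sumL (fun _ => 0) l).
      by elim: (l) => [|? ? IH'] //=; rewrite IH' addr0.
    apply: sumL_ext => j Hj; case: (Hb1 j Hj) => _ _ H; apply: H.
    by move=> E; apply: Hi; rewrite E.
  pose b j := if j == i then a i * (1 - J) else b' j.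
  have Hbi : b i = a i * (1 - J) by rewrite /b eqxx.
  have Hbj : forall j, List.In j l -> b j = b' j.
    move=> j Hj; rewrite /b; case: eqP => // E; by case: Hi; rewrite -E.
  have [[Hai _] [Hai1 Hai0]] := Ha i.
  have Hbi_orth : forall j, List.In j l -> b i * b j = 0.
    move=> j Hj; rewrite Hbi Hbj //.
    have -> : a i * (1 - J) * b' j = a i * (b' j - b' j * J) by ring.
    by rewrite Hb'J // subrr mulr0.
  exists b; split.
  - move=> j /= [<-|Hj]; last by rewrite Hbj //; exact: Hb1.
    rewrite Hbi; split.
    + by apply: idem_mul => //; exact: idem_compl.
    + by rewrite (phi_mul Hphi _ (Hall _) (Hall _)) (phi_sub Hsto Hphi _ (Hall _) (Hall _))
         Hphi1 HphiJ Hai1 subr0 mulr1.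
    + by move=> m Hm; rewrite (phi_mul Hphi _ (Hall _) (Hall _)) Hai0 // mul0r.
  - move=> j k /= [<-|Hj] [<-|Hk] Hne //.
    + exact: Hbi_orth.
    + by rewrite mulrC; apply: Hbi_orth.
    + by rewrite !Hbj //; apply: Hb2.
set l := enum 'I_n.
have Hnd : List.NoDup l by apply: uniq_NoDup; exact: enum_uniq.
have Hinl : forall i, List.In i l by move=> i; apply: In_mem; rewrite mem_enum.
have [b [Hb1 Hb2]] := Hol l Hnd.
have Hbb : forall j, b j * sumL b l = b j.
  move=> j; apply: mul_sumL_in => //; last by case: (Hb1 j (Hinl j)).
  by move=> k _ Hne; apply: Hb2 => // E; apply: Hne.
set r := 1 - sumL b l.
have Hrb : forall j, r * b j = 0.
  by move=> j; rewrite /r mulrBl mul1r mulrC Hbb subrr.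
have Hrr : r * r = r.
  rewrite {1}/r mulrBl mul1r sumL_zero ?subr0 // => j _; by rewrite mulrC Hrb.
have HSr : S top r.
  apply/(phi_ker Hphi (Hall r)) => m.
  rewrite (phi_sub Hsto Hphi _ (Hall _) (Hall _)) Hphi1 phi_sumL.
  rewrite (@sumL_delta _ _ _ l m Hnd (Hinl m)).
    by case: (Hb1 m (Hinl m)) => _ -> _; rewrite subrr.
  by move=> j _ Hne; case: (Hb1 j (Hinl j)) => _ _ H; apply: H => E; apply: Hne.
have Hbat : forall j, atomic top (b j).
  move=> j; case: (Hb1 j (Hinl j)) => H1 H2 H3; exact: (phi_atomic Hsto Hphi H1 (Hall _) H2 H3).
pose i0 : 'I_n := Ordinal Hn.
pose es j := b j + (if j == i0 then r else 0).
exists es; split.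
  move=> j; rewrite /es; case: eqP => [->|_]; last by rewrite addr0.
  apply: (atomic_add Hsto (Hbat i0) HSr Hrr); by rewrite mulrC Hrb.
split.
  move=> i j Hne; rewrite /es.
  have Hb0 := Hb2 i j (Hinl i) (Hinl j) Hne.
  case: eqP => [Ei|_]; case: eqP => [Ej|_].
  - by case: Hne; rewrite Ei Ej.
  - by rewrite addr0 mulrDl Hb0 Hrb addr0.
  - by rewrite addr0 mulrDr Hb0 mulrC Hrb addr0.
  - by rewrite !addr0.
rewrite /es sumL_add (@sumL_delta _ _ (fun j => if j == i0 then r else 0) l i0 Hnd (Hinl i0)).
  by rewrite eqxx /r subrKC.
by move=> j _ Hne; case: eqP.
Qed.

End Top.

Theorem theorem7p1 (K : fieldType) (R : comAlgType K)
  (W : Type) (lt : W -> W -> Prop) (wf : well_founded lt) (top : W) (n : nat) :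
  strict_total_order lt ->
  (forall w, w = top \/ lt w top) ->
  (exists e : W -> nat, injective e) ->
  von_neumann_regular R ->
  (forall w, ~ (forall x : R, socle_seq wf w x)) ->
  (forall x : R, soc_step (socle_seq wf top) x) ->
  (forall w, exists (L : Type) (phi : R -> L -> K),
      inhabited L /\ (exists e : L -> nat, injective e) /\ layer_iso wf w phi) ->
  (0 < n)%N ->
  (exists phi : R -> 'I_n -> K, layer_iso wf top phi) ->
  exists f : R -> 'I_n -> El K W, B_iso wf top f.
Proof.
move=> Hsto _ Hcnt Hvnr _ Hall Hlay Hn [phi Hphi].
have HallT : forall x, @T K R W lt wf top x by exact: Hall.
have [es [Hes1 [Hes2 Hes3]]] := top_dec Hsto Hvnr Hphi HallT Hn.
have [Fs HFs] := ClassicalEpsilon.choice _ (fun i => iso_exists Hsto Hvnr Hlay Hcnt (Hes1 i)).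
set l := enum 'I_n in Hes3.
have Hnd : List.NoDup l by apply: uniq_NoDup; exact: enum_uniq.
have Hinl : forall i, List.In i l by move=> i; apply: In_mem; rewrite mem_enum.
have Hidem : forall i, es i * es i = es i by move=> i; case: (Hes1 i).
exists (fun x i => Fs i x); split.
  by move=> x i; have [H _] := HFs i; apply: H.
split.
  move=> y Hy.
  have [xs Hxs] : exists xs : 'I_n -> R, forall i, Fs i (xs i) = y i.
    apply: (ClassicalEpsilon.choice (fun i x => Fs i x = y i)) => i.
    by have [_ [H _]] := HFs i; apply: H.
  exists (sumL (fun i => xs i * es i) l) => i.
  have [_ [_ [_ [H4 _]]]] := HFs i.
  rewrite H4 (sumL_in_gen _ Hnd (Hinl i)) //.
    by rewrite -H4.
  by move=> k _ Hne; apply: Hes2.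
split.
  move=> x y H.
  have E : forall i, x * es i = y * es i.
    by move=> i; have [_ [_ [H3 _]]] := HFs i; apply: H3; apply: H.
  rewrite -(mulr1 x) -(mulr1 y) -Hes3 !mulr_sumL; apply: sumL_ext => i _; exact: E.
split.
  by move=> x y i; have [_ [_ [_ [_ [H _]]]]] := HFs i; apply: H.
split.
  by move=> x y i; have [_ [_ [_ [_ [_ [H _]]]]]] := HFs i; apply: H.
split.
  by move=> c x i; have [_ [_ [_ [_ [_ [_ [H _]]]]]]] := HFs i; apply: H.
move=> i; have [_ [_ [_ [H4 [_ [_ [_ H8]]]]]]] := HFs i.
by rewrite H4 mul1r.
Qed.
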